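(* On a Real RAM, for an embedded, vertex-weighted star $S$ it can be decided in linear time whether $S$ has a weighted disk contact representation respecting the embedding, and such a representation (if one exists) can be constructed in linear time.
   Context: A disk contact representation of a graph $G=(V,E)$ is a set of interior-disjoint closed disks in the plane together with a bijection between $V$ and the disks such that two disks touch if and only if the corresponding vertices are adjacent. Given positive vertex weights $w(v)$, a weighted disk contact representation is one in which the disk representing each vertex $v$ has radius proportional to $w(v)$. A star is a tree consisting of one central vertex adjacent to all other vertices (leaves). The star is embedded if a cyclic order of the leaves around the central vertex is prescribed; a representation respects the embedding if the leaf disks touch the central disk in this cyclic order. The Real RAM model assumes that basic arithmetic operations, including square roots and trigonometric functions, on real numbers take constant time. *)

(* Defs.v *)
From Stdlib Require Import Reals ZArith List.
Open Scope R_scope.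

(* The star has a central vertex and n leaves 0..n-1; the leaves are
   listed in the prescribed cyclic (counterclockwise) order.  Weights:
   w0 for the centre, w i for leaf i. *)

Definition dist2 (p q : R * R) : R :=
  (fst p - fst q) ^ 2 + (snd p - snd q) ^ 2.

Definition disks_touch (p : R * R) (r : R) (q : R * R) (s : R) : Prop :=
  dist2 p q = (r + s) ^ 2.

Definition disks_apart (p : R * R) (r : R) (q : R * R) (s : R) : Prop :=
  dist2 p q > (r + s) ^ 2.

(* The leaf disks touch the central disk in counterclockwise cyclic order
   0, 1, ..., n-1: the directions from the central centre to the leaf
   centres have angles theta 0 < theta 1 < ... < theta (n-1) < theta 0 + 2 PI. *)
Definition respects_embedding (n : nat) (c0 : R * R) (c : nat -> R * R) : Prop :=
  exists (theta rho : nat -> R),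
    (forall i, (i < n)%nat -> 0 < rho i /\
        c i = (fst c0 + rho i * cos (theta i), snd c0 + rho i * sin (theta i))) /\
    (forall i, (S i < n)%nat -> theta i < theta (S i)) /\
    ((0 < n)%nat -> theta (pred n) < theta O + 2 * PI).

(* (c0,r0) is the central disk, (c i, r i) the disk of leaf i. *)
Definition is_weighted_star_rep (n : nat) (w0 : R) (w : nat -> R)
    (c0 : R * R) (r0 : R) (c : nat -> R * R) (r : nat -> R) : Prop :=
  (exists lambda : R, 0 < lambda /\ r0 = lambda * w0 /\
      forall i, (i < n)%nat -> r i = lambda * w i) /\
  (forall i, (i < n)%nat -> disks_touch c0 r0 (c i) (r i)) /\
  (forall i j, (i < n)%nat -> (j < n)%nat -> i <> j ->
      disks_apart (c i) (r i) (c j) (r j)) /\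
  respects_embedding n c0 c.

Definition has_weighted_star_rep (n : nat) (w0 : R) (w : nat -> R) : Prop :=
  exists c0 r0 c r, is_weighted_star_rep n w0 w c0 r0 c r.

(* Every instruction
   costs one time unit.  There is no floor / real-to-integer conversion. *)
Inductive instr : Type :=
  | RConst (d : nat) (z : Z)
  | RAdd (d a b : nat) | RSub (d a b : nat) | RMul (d a b : nat) | RDiv (d a b : nat)
  | RSqrt (d a : nat)
  | RSin (d a : nat) | RCos (d a : nat) | RTan (d a : nat)
  | RAsin (d a : nat) | RAcos (d a : nat) | RAtan (d a : nat)
  | RPi (d : nat)
  | RMov (d a : nat)
  | RLoad (d ia : nat)
  | RStore (ia a : nat)
  | IToR (d ia : nat)
  | IConst (d : nat) (z : Z)
  | IAdd (d a b : nat) | ISub (d a b : nat) | IMul (d a b : nat)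
  | IMov (d a : nat)
  | ILoad (d ia : nat)
  | IStore (ia a : nat)
  | JLtR (a b tgt : nat) | JEqR (a b tgt : nat)
  | JLtI (a b tgt : nat) | JEqI (a b tgt : nat)
  | Jmp (tgt : nat)
  | Halt.

Record config : Type := Config { pc : nat; rm : nat -> R; im : nat -> Z }.

Definition updR (m : nat -> R) (k : nat) (v : R) : nat -> R :=
  fun j => if Nat.eqb j k then v else m j.
Definition updZ (m : nat -> Z) (k : nat) (v : Z) : nat -> Z :=
  fun j => if Nat.eqb j k then v else m j.

Definition halted (prog : list instr) (s : config) : Prop :=
  nth (pc s) prog Halt = Halt.

Definition step (prog : list instr) (s : config) : config :=
  let p := pc s in let m := rm s in let z := im s in
  let nx := S p in
  let setR d v := Config nx (updR m d v) z in
  let setZ d v := Config nx m (updZ z d v) in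
  match nth p prog Halt with
  | RConst d k => setR d (IZR k)
  | RAdd d a b => setR d (m a + m b)
  | RSub d a b => setR d (m a - m b)
  | RMul d a b => setR d (m a * m b)
  | RDiv d a b => setR d (m a / m b)
  | RSqrt d a => setR d (sqrt (m a))
  | RSin d a => setR d (sin (m a))
  | RCos d a => setR d (cos (m a))
  | RTan d a => setR d (tan (m a))
  | RAsin d a => setR d (asin (m a))
  | RAcos d a => setR d (acos (m a))
  | RAtan d a => setR d (atan (m a))
  | RPi d => setR d PI
  | RMov d a => setR d (m a)
  | RLoad d ia => setR d (m (Z.to_nat (z ia)))
  | RStore ia a => setR (Z.to_nat (z ia)) (m a)
  | IToR d ia => setR d (IZR (z ia))
  | IConst d k => setZ d k
  | IAdd d a b => setZ d (z a + z b)%Z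
  | ISub d a b => setZ d (z a - z b)%Z
  | IMul d a b => setZ d (z a * z b)%Z
  | IMov d a => setZ d (z a)
  | ILoad d ia => setZ d (z (Z.to_nat (z ia)))
  | IStore ia a => setZ (Z.to_nat (z ia)) (z a)
  | JLtR a b t => Config (if Rlt_dec (m a) (m b) then t else nx) m z
  | JEqR a b t => Config (if Req_EM_T (m a) (m b) then t else nx) m z
  | JLtI a b t => Config (if Z.ltb (z a) (z b) then t else nx) m z
  | JEqI a b t => Config (if Z.eqb (z a) (z b) then t else nx) m z
  | Jmp t => Config t m z
  | Halt => s
  end.

Fixpoint run (prog : list instr) (t : nat) (s : config) : config :=
  match t with
  | O => s
  | S t' => run prog t' (step prog s)
  end.

(* Input encoding for a star with n leaves: im[0] = n, rm[0] = w0,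
   rm[1+i] = w i for i < n; all other cells are 0; pc = 0. *)
Definition star_input (n : nat) (w0 : R) (w : nat -> R) : config :=
  Config O
    (fun j => match j with O => w0 | S i => if Nat.ltb i n then w i else 0 end)
    (fun j => match j with O => Z.of_nat n | _ => 0%Z end).

(* Output encoding: im[0] = 1 means "a representation exists"; then the
   central disk is (rm[0], rm[1]) with radius rm[2], and leaf i's disk is
   (rm[3+3i], rm[4+3i]) with radius rm[5+3i]. *)
Definition out_yes (s : config) : Prop := im s 0 = 1%Z.
Definition out_c0 (s : config) : R * R := (rm s 0, rm s 1).
Definition out_r0 (s : config) : R := rm s 2.
Definition out_c (s : config) (i : nat) : R * R := (rm s (3 + 3 * i), rm s (4 + 3 * i)).
Definition out_r (s : config) (i : nat) : R := rm s (5 + 3 * i).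

(* Main.v *)
Require Import Defs.
From Stdlib Require Import Reals ZArith List Lra Lia Psatz.
From Stdlib Require Import FunctionalExtensionality.
Import ListNotations.
Open Scope R_scope.

Definition psi (x y : R) : R := 2 * asin (sqrt (x * y)).

Lemma asin_le a b : -1 <= a -> a <= b -> b <= 1 -> asin a <= asin b.
Proof.
  intros H1 H2 H3. destruct (Rle_or_lt (asin a) (asin b)) as [H|H]; auto.
  exfalso. pose proof (asin_bound a). pose proof (asin_bound b).
  assert (Hs: sin (asin b) < sin (asin a)) by (apply sin_increasing_1; lra).
  rewrite !sin_asin in Hs; lra.
Qed.

Lemma psi_sym x y : psi x y = psi y x.
Proof. unfold psi; now rewrite (Rmult_comm x y). Qed.

Lemma sqrt_prod_bound x y : 0 <= x <= 1 -> 0 <= y <= 1 -> 0 <= sqrt (x*y) <= 1.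
Proof.
  intros. split. apply sqrt_pos. rewrite <- sqrt_1. apply sqrt_le_1_alt. nra.
Qed.

Lemma psi_nonneg x y : 0 <= x <= 1 -> 0 <= y <= 1 -> 0 <= psi x y.
Proof.
  intros. unfold psi. pose proof (sqrt_prod_bound x y H H0).
  rewrite <- asin_0. assert (asin 0 <= asin (sqrt (x*y))) by (apply asin_le; lra). rewrite asin_0 in *. lra.
Qed.

Lemma psi_mono x x' y : 0 <= x -> x <= x' -> x' <= 1 -> 0 <= y <= 1 -> psi x y <= psi x' y.
Proof.
  intros. unfold psi. pose proof (sqrt_prod_bound x y ltac:(lra) H2).
  pose proof (sqrt_prod_bound x' y ltac:(lra) H2).
  assert (sqrt (x*y) <= sqrt (x'*y)) by (apply sqrt_le_1_alt; nra).
  assert (asin (sqrt (x*y)) <= asin (sqrt (x'*y))) by (apply asin_le; lra). lra.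
Qed.

Lemma psi_cos x y : 0 <= x <= 1 -> 0 <= y <= 1 -> cos (psi x y) = 1 - 2 * x * y.
Proof.
  intros. unfold psi. rewrite cos_2a_sin. pose proof (sqrt_prod_bound x y H H0).
  rewrite sin_asin by lra. rewrite Rmult_assoc, sqrt_sqrt by nra. ring.
Qed.

Lemma psi_range x y : 0 < x < 1 -> 0 < y < 1 -> 0 < psi x y < PI.
Proof.
  intros. unfold psi.
  assert (0 < x*y < 1) by nra.
  assert (0 < sqrt (x*y)) by (apply sqrt_lt_R0; lra).
  assert (sqrt (x*y) < 1) by (rewrite <- sqrt_1; apply sqrt_lt_1_alt; lra).
  pose proof (asin_bound_lt (sqrt (x*y)) ltac:(lra)).
  assert (asin 0 < asin (sqrt (x*y))).
  { destruct (Rle_or_lt (asin (sqrt (x*y))) (asin 0)) as [H8|H8]; auto. exfalso.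
    pose proof (asin_bound 0). 
    destruct (Rle_lt_or_eq_dec _ _ H8) as [H9|H9].
    - assert (H10: sin (asin (sqrt (x*y))) < sin (asin 0)) by (apply sin_increasing_1; lra).
      rewrite !sin_asin in H10; lra.
    - apply (f_equal sin) in H9. rewrite !sin_asin in H9; lra. }
  rewrite asin_0 in H5. lra.
Qed.

Lemma cos_2PI_minus x : cos (2 * PI - x) = cos x.
Proof.
  rewrite cos_minus, cos_2PI, sin_2PI. ring.
Qed.

Lemma cos_lt_range p D : 0 < p < PI -> p < D < 2 * PI - p -> cos D < cos p.
Proof.
  intros. destruct (Rle_or_lt D PI).
  - apply cos_decreasing_1; lra.
  - rewrite <- cos_2PI_minus. apply cos_decreasing_1; lra.
Qed.

Lemma range_of_cos_lt p D : 0 < p < PI -> 0 < D < 2 * PI -> cos D < cos p ->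
  p < D < 2 * PI - p.
Proof.
  intros. split.
  - destruct (Rle_or_lt D p); auto. exfalso.
    destruct (Req_dec D p). subst; lra.
    assert (cos p < cos D) by (apply cos_decreasing_1; lra). lra.
  - destruct (Rle_or_lt (2*PI - p) D); [|auto]. exfalso.
    rewrite <- cos_2PI_minus in H1.
    destruct (Req_dec (2*PI - D) p). rewrite H3 in H1; lra.
    assert (cos p < cos (2*PI - D)) by (apply cos_decreasing_1; lra). lra.
Qed.

Definition in01 (a : nat -> R) n := forall k, (k < n)%nat -> 0 < a k < 1.
Definition sound (a q : nat -> R) (j : nat) :=
  forall i l, (i < l)%nat -> (l < j)%nat -> q i + psi (a i) (a l) <= q l.
Definition attained (a q : nat -> R) (j : nat) := q 0%nat = 0 /\
  forall l, (0 < l)%nat -> (l < j)%nat -> exists i, (i < l)%nat /\ q l = q i + psi (a i) (a l).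
Definition Tspec (a q : nat -> R) n T :=
  (forall l, (1 <= l)%nat -> (l < n)%nat -> q l + psi (a l) (a 0%nat) <= T) /\
  (T = 0 \/ exists l, (1<=l)%nat /\ (l<n)%nat /\ T = q l + psi (a l) (a 0%nat)).

Lemma psi_mono2 x y y' : 0 <= x <= 1 -> 0 <= y -> y <= y' -> y' <= 1 -> psi x y <= psi x y'.
Proof. intros. rewrite (psi_sym x y), (psi_sym x y'). apply psi_mono; lra. Qed.

Section S.
Variables (a q : nat -> R) (n : nat) (T : R).

Lemma suff_thm : in01 a n -> (forall k, (k < n)%nat -> a k <= a 0%nat) ->
  sound a q n -> q 0%nat = 0 -> Tspec a q n T -> T < 2 * PI -> (0 < n)%nat ->
  let d := (2 * PI - T) / INR n in
  let p := fun k => q k + d * INR k in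
  (forall k l, (k < l)%nat -> (l < n)%nat ->
     psi (a k) (a l) < p l - p k < 2 * PI - psi (a k) (a l)) /\
  (forall k, (k < n)%nat -> 0 <= p k < 2 * PI).
Proof.
  intros Ha Hmax Hs Hq0 [HT1 HT2] HT Hn d p.
  assert (Hnr : 0 < INR n) by (apply lt_0_INR; lia).
  assert (Hd : 0 < d) by (unfold d; apply Rdiv_lt_0_compat; lra).
  assert (Hdn : d * INR n = 2 * PI - T) by (unfold d; field; lra).
  assert (Hq : forall k, (k < n)%nat -> 0 <= q k).
  { intros k Hk. destruct k. lra. specialize (Hs 0%nat (S k) ltac:(lia) Hk).
    pose proof (psi_nonneg (a 0%nat) (a (S k))). 
    pose proof (Ha 0%nat ltac:(lia)). pose proof (Ha (S k) Hk). 
    assert (0 <= psi (a 0%nat) (a (S k))) by (apply H; lra). lra. }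
  assert (Hp : forall k, (k < n)%nat -> 0 <= p k < 2 * PI).
  { intros k Hk. unfold p. pose proof (Hq k Hk). pose proof (pos_INR k).
    split. nra.
    assert (INR k <= INR n - 1).
    { assert (INR (S k) <= INR n) by (apply le_INR; lia). rewrite S_INR in *. lra. }
    destruct k.
    - simpl. pose proof PI_RGT_0. lra.
    - specialize (HT1 (S k) ltac:(lia) Hk).
      pose proof (Ha 0%nat ltac:(lia)). pose proof (Ha (S k) Hk).
      pose proof (psi_nonneg (a (S k)) (a 0%nat) ltac:(lra) ltac:(lra)). nra. }
  split; [|exact Hp].
  intros k l Hkl Hl.
  pose proof (Ha k ltac:(lia)). pose proof (Ha l Hl). pose proof (Ha 0%nat ltac:(lia)).
  assert (Hlk : INR k < INR l) by (apply lt_INR; lia).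
  split.
  - unfold p. specialize (Hs k l Hkl Hl). nra.
  - pose proof (Hp k ltac:(lia)).
    assert (psi (a k) (a l) <= psi (a l) (a 0%nat)).
    { rewrite psi_sym. apply psi_mono2; try lra. apply Hmax; lia. }
    specialize (HT1 l ltac:(lia) Hl).
    assert (INR l <= INR n - 1).
    { assert (INR (S l) <= INR n) by (apply le_INR; lia). rewrite S_INR in *. lra. }
    unfold p in *. nra.
Qed.

Lemma nec_thm : in01 a n -> attained a q n -> Tspec a q n T ->
  forall P : nat -> R, P 0%nat = 0 ->
  (forall k l, (k < l)%nat -> (l < n)%nat ->
     psi (a k) (a l) < P l - P k < 2 * PI - psi (a k) (a l)) ->
  T < 2 * PI.
Proof.
  intros Ha [Hq0 Hatt] [HT1 HT2] P HP0 HP.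
  assert (Hle : forall l, (l < n)%nat -> q l <= P l).
  { intro l. induction l as [l IH] using lt_wf_ind. intros Hl.
    destruct l. lra.
    destruct (Hatt (S l) ltac:(lia) Hl) as [i [Hi Heq]].
    specialize (IH i Hi ltac:(lia)). specialize (HP i (S l) Hi Hl). lra. }
  destruct HT2 as [->|[l [H1 [H2 ->]]]].
  - pose proof PI_RGT_0. lra.
  - specialize (HP 0%nat l ltac:(lia) H2). specialize (Hle l H2).
    rewrite psi_sym. lra.
Qed.
End S.

Lemma sc1 x : sin x ^ 2 + cos x ^ 2 = 1.
Proof. pose proof (sin2_cos2 x). unfold Rsqr in H. lra. Qed.

Lemma cos_m2PI x : cos (x - 2 * PI) = cos x.
Proof. rewrite cos_minus, cos_2PI, sin_2PI. ring. Qed.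
Lemma sin_m2PI x : sin (x - 2 * PI) = sin x.
Proof. rewrite sin_minus, cos_2PI, sin_2PI. ring. Qed.
Lemma cos_p2PI x : cos (x + 2 * PI) = cos x.
Proof. rewrite cos_plus, cos_2PI, sin_2PI. ring. Qed.

Lemma dist2_polar x0 y0 A B s t :
  dist2 (x0 + A * cos s, y0 + A * sin s) (x0 + B * cos t, y0 + B * sin t)
  = A^2 + B^2 - 2 * A * B * cos (s - t).
Proof.
  unfold dist2; simpl fst; simpl snd. rewrite cos_minus.
  pose proof (sc1 s). pose proof (sc1 t).
  transitivity (A^2 * (sin s ^2 + cos s ^2) + B^2 * (sin t^2 + cos t^2) - 2*A*B*(cos s * cos t + sin s * sin t)).
  ring. rewrite H, H0. ring.
Qed.

Lemma apart_equiv x0 y0 r0 ri rj s t : 0 < r0 -> 0 < ri -> 0 < rj ->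
  disks_apart (x0 + (r0+ri) * cos s, y0 + (r0+ri) * sin s) ri
              (x0 + (r0+rj) * cos t, y0 + (r0+rj) * sin t) rj <->
  cos (s - t) < 1 - 2 * (ri / (r0 + ri)) * (rj / (r0 + rj)).
Proof.
  intros. unfold disks_apart. rewrite dist2_polar.
  set (X := cos (s - t)).
  assert (E : 1 - 2 * (ri / (r0 + ri)) * (rj / (r0 + rj)) =
              ((r0+ri)*(r0+rj) - 2*ri*rj) / ((r0+ri)*(r0+rj))) by (field; lra).
  rewrite E. assert (0 < (r0+ri)*(r0+rj)) by nra.
  split; intro H3.
  - apply Rmult_lt_reg_r with ((r0+ri)*(r0+rj)); auto.
    unfold Rdiv. rewrite Rmult_assoc, Rinv_l by lra. nra.
  - assert (X * ((r0+ri)*(r0+rj)) < (r0 + ri) * (r0 + rj) - 2 * ri * rj).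
    { apply Rmult_lt_compat_r with (r := (r0+ri)*(r0+rj)) in H3; auto.
      unfold Rdiv in H3. rewrite Rmult_assoc, Rinv_l in H3 by lra. lra. }
    nra.
Qed.

Definition leaf (n m k : nat) : nat := if Nat.ltb (m + k) n then (m + k)%nat else (m + k - n)%nat.
Definition kof (n m j : nat) : nat := if Nat.leb m j then (j - m)%nat else (j + n - m)%nat.

Lemma leaf_lt n m k : (m < n)%nat -> (k < n)%nat -> (leaf n m k < n)%nat.
Proof. unfold leaf; intros; destruct (Nat.ltb_spec (m+k) n); lia. Qed.
Lemma kof_lt n m j : (m < n)%nat -> (j < n)%nat -> (kof n m j < n)%nat.
Proof. unfold kof; intros; destruct (Nat.leb_spec m j); lia. Qed.
Lemma leaf_kof n m j : (m < n)%nat -> (j < n)%nat -> leaf n m (kof n m j) = j.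
Proof. unfold kof, leaf; intros; destruct (Nat.leb_spec m j); [destruct (Nat.ltb_spec (m + (j - m)) n)|destruct (Nat.ltb_spec (m + (j + n - m)) n)]; lia. Qed.
Lemma kof_leaf n m k : (m < n)%nat -> (k < n)%nat -> kof n m (leaf n m k) = k.
Proof. unfold kof, leaf; intros; destruct (Nat.ltb_spec (m+k) n); [destruct (Nat.leb_spec m (m+k))|destruct (Nat.leb_spec m (m+k-n))]; lia. Qed.

Definition uu (w0 : R) (w : nat -> R) i := w i / (w0 + w i).

Lemma uu_range w0 w i : 0 < w0 -> 0 < w i -> 0 < uu w0 w i < 1.
Proof.
  intros. unfold uu. split. apply Rdiv_lt_0_compat; lra.
  apply Rmult_lt_reg_r with (w0 + w i). lra. unfold Rdiv. rewrite Rmult_assoc, Rinv_l by lra. lra.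
Qed.

Section Rep.
Variables (n m : nat) (w0 : R) (w : nat -> R).
Hypothesis Hw0 : 0 < w0.
Hypothesis Hw : forall i, (i < n)%nat -> 0 < w i.
Hypothesis Hm : (m < n)%nat.

Let a k := uu w0 w (leaf n m k).

Lemma a_in01 : in01 a n.
Proof. intros k Hk. apply uu_range; auto. apply Hw, leaf_lt; auto. Qed.

Definition outc (p : nat -> R) (j : nat) : R * R :=
  ((w0 + w j) * cos (p (kof n m j)), (w0 + w j) * sin (p (kof n m j))).

Lemma rep_suff (p : nat -> R) :
  (forall k l, (k < l)%nat -> (l < n)%nat -> psi (a k) (a l) < p l - p k < 2 * PI - psi (a k) (a l)) ->
  (forall k, (k < n)%nat -> 0 <= p k < 2 * PI) ->
  is_weighted_star_rep n w0 w (0, 0) w0 (outc p) w.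
Proof.
  intros Hp Hp2.
  assert (Hinc : forall k l, (k < l)%nat -> (l < n)%nat -> p k < p l).
  { intros k l H1 H2. pose proof (Hp k l H1 H2). pose proof (a_in01 k ltac:(lia)).
    pose proof (a_in01 l H2). pose proof (psi_range _ _ H0 H3). lra. }
  set (theta := fun j => p (kof n m j) - (if Nat.ltb j m then 2 * PI else 0)).
  assert (Hc : forall j, outc p j = (0 + (w0 + w j) * cos (theta j), 0 + (w0 + w j) * sin (theta j))).
  { intro j. unfold outc, theta. destruct (Nat.ltb j m).
    - rewrite cos_m2PI, sin_m2PI. f_equal; ring.
    - rewrite Rminus_0_r. f_equal; ring. }
  split; [|split; [|split]].
  - exists 1. split. lra. split. ring. intros; ring.
  - intros i Hi. unfold disks_touch. rewrite Hc.
    replace (0, 0) with (0 + 0 * cos 0, 0 + 0 * sin 0) by (f_equal; ring).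
    rewrite dist2_polar. ring_simplify. reflexivity.
  - intros i j Hi Hj Hij. rewrite !Hc. apply apart_equiv; auto.
    assert (Hci : cos (theta i - theta j) = cos (p (kof n m i) - p (kof n m j))).
    { unfold theta. destruct (Nat.ltb i m), (Nat.ltb j m).
      - f_equal; ring.
      - replace (p (kof n m i) - 2 * PI - (p (kof n m j) - 0)) with (p (kof n m i) - p (kof n m j) - 2*PI) by ring.
        apply cos_m2PI.
      - replace (p (kof n m i) - 0 - (p (kof n m j) - 2*PI)) with (p (kof n m i) - p (kof n m j) + 2*PI) by ring.
        apply cos_p2PI.
      - f_equal; ring. }
    rewrite Hci.
    assert (Hai : uu w0 w i = a (kof n m i)) by (unfold a; rewrite leaf_kof; auto).
    assert (Haj : uu w0 w j = a (kof n m j)) by (unfold a; rewrite leaf_kof; auto).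
    change (w i / (w0 + w i)) with (uu w0 w i). change (w j / (w0 + w j)) with (uu w0 w j).
    rewrite Hai, Haj.
    pose proof (kof_lt n m i Hm Hi). pose proof (kof_lt n m j Hm Hj).
    assert (kof n m i <> kof n m j).
    { intro E. apply Hij. rewrite <- (leaf_kof n m i), <- (leaf_kof n m j), E; auto. }
    set (k := kof n m i) in *. set (l := kof n m j) in *.
    pose proof (a_in01 k H). pose proof (a_in01 l H0).
    destruct (Nat.lt_gt_cases k l) as [[Hlt|Hlt] _]; [exact H1| |].
    + specialize (Hp k l Hlt H0). pose proof (psi_range _ _ H2 H3).
      rewrite <- cos_neg. replace (- (p k - p l)) with (p l - p k) by ring.
      rewrite <- psi_cos by lra. apply cos_lt_range; lra.
    + specialize (Hp l k Hlt H). pose proof (psi_range _ _ H3 H2).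
      replace (2 * a k * a l) with (2 * a l * a k) by ring.
      rewrite <- psi_cos by lra. apply cos_lt_range; lra.
  - exists theta, (fun j => w0 + w j). split; [|split].
    + intros i Hi. split. pose proof (Hw i Hi); lra. rewrite Hc. reflexivity.
    + intros i Hi. unfold theta, kof.
      destruct (Nat.ltb_spec i m), (Nat.ltb_spec (S i) m), (Nat.leb_spec m i), (Nat.leb_spec m (S i));
        try lia.
      * assert (p (i + n - m)%nat < p (S i + n - m)%nat) by (apply Hinc; lia). lra.
      * replace (S i - m)%nat with 0%nat by lia.
        pose proof (Hp2 (i + n - m)%nat ltac:(lia)). pose proof (Hp2 0%nat ltac:(lia)). lra.
      * assert (p (i - m)%nat < p (S i - m)%nat) by (apply Hinc; lia). lra.
    + intros Hn. unfold theta, kof.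
      destruct (Nat.ltb_spec (pred n) m), (Nat.ltb_spec 0 m), (Nat.leb_spec m (pred n)), (Nat.leb_spec m 0); try lia.
      * assert (p (pred n - m)%nat < p (0 + n - m)%nat) by (apply Hinc; lia). lra.
      * replace m with 0%nat in * by lia.
        pose proof (Hp2 (pred n - 0)%nat ltac:(lia)). pose proof (Hp2 (0 - 0)%nat ltac:(lia)). lra.
Qed.

End Rep.

Section Nec.
Variables (n m : nat) (w0 : R) (w : nat -> R).
Hypothesis Hw0 : 0 < w0.
Hypothesis Hw : forall i, (i < n)%nat -> 0 < w i.
Hypothesis Hm : (m < n)%nat.

Let a k := uu w0 w (leaf n m k).

Lemma sq_eq_pos x y : 0 < x -> 0 < y -> x ^ 2 = y ^ 2 -> x = y.
Proof. intros. nra. Qed.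

Lemma rep_nec c0 r0 c r : is_weighted_star_rep n w0 w c0 r0 c r ->
  exists P : nat -> R, P 0%nat = 0 /\
  forall k l, (k < l)%nat -> (l < n)%nat -> psi (a k) (a l) < P l - P k < 2 * PI - psi (a k) (a l).
Proof.
  intros [[lam [Hl [Hr0 Hr]]] [Ht [Hap [theta [rho [Hc [Hinc Hlast]]]]]]].
  assert (Hrpos : forall i, (i < n)%nat -> 0 < r i).
  { intros i Hi. rewrite Hr by auto. pose proof (Hw i Hi). nra. }
  assert (Hr0p : 0 < r0) by (rewrite Hr0; nra).
  assert (Hrho : forall i, (i < n)%nat -> rho i = r0 + r i).
  { intros i Hi. destruct (Hc i Hi) as [Hp Hci]. specialize (Ht i Hi). unfold disks_touch in Ht.
    rewrite Hci in Ht. destruct c0 as [x0 y0]. cbn [fst snd] in Ht.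
    replace (x0, y0) with (x0 + 0 * cos 0, y0 + 0 * sin 0) in Ht by (f_equal; ring).
    rewrite dist2_polar in Ht. apply sq_eq_pos; auto. pose proof (Hrpos i Hi). lra.
    rewrite <- Ht. ring. }
  assert (Hcos : forall i j, (i < n)%nat -> (j < n)%nat -> i <> j ->
             cos (theta i - theta j) < 1 - 2 * uu w0 w i * uu w0 w j).
  { intros i j Hi Hj Hij. specialize (Hap i j Hi Hj Hij).
    destruct (Hc i Hi) as [_ Hci]. destruct (Hc j Hj) as [_ Hcj].
    rewrite Hci, Hcj, (Hrho i Hi), (Hrho j Hj) in Hap.
    apply apart_equiv in Hap; auto.
    replace (r i / (r0 + r i)) with (uu w0 w i) in Hap.
    replace (r j / (r0 + r j)) with (uu w0 w j) in Hap. lra.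
    unfold uu. rewrite Hr0, Hr by auto. pose proof (Hw j Hj). field. split; nra.
    unfold uu. rewrite Hr0, Hr by auto. pose proof (Hw i Hi). field. split; nra. }
  assert (Hmono : forall i j, (i < j)%nat -> (j < n)%nat -> theta i < theta j).
  { intros i j Hij. induction j. lia. intros Hj.
    destruct (Nat.eq_dec i j). subst. apply Hinc; auto.
    specialize (IHj ltac:(lia) ltac:(lia)). specialize (Hinc j Hj). lra. }
  assert (Hwrap : forall i j, (i < j)%nat -> (j < n)%nat -> theta j < theta i + 2 * PI).
  { intros i j Hij Hj. specialize (Hlast ltac:(lia)).
    assert (theta j <= theta (pred n)).
    { destruct (Nat.eq_dec j (pred n)). subst; lra. left; apply Hmono; lia. }
    assert (theta 0%nat <= theta i).
    { destruct i. lra. left; apply Hmono; lia. }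
    lra. }
  exists (fun k => theta (leaf n m k) - theta m + (if Nat.ltb (m + k) n then 0 else 2 * PI)).
  split.
  - unfold leaf. replace (m + 0)%nat with m by lia. destruct (Nat.ltb_spec m n); [ring|lia].
  - intros k l Hkl Hln. cbv zeta.
    assert (Hak : 0 < a k < 1) by exact (a_in01 n m w0 w Hw0 Hw Hm k ltac:(lia)).
    assert (Hal : 0 < a l < 1) by exact (a_in01 n m w0 w Hw0 Hw Hm l Hln).
    pose proof (psi_range _ _ Hak Hal) as Hps.
    assert (Hneq : leaf n m k <> leaf n m l).
    { intro E. apply (f_equal (kof n m)) in E. rewrite !kof_leaf in E; auto; lia. }
    pose proof (leaf_lt n m k Hm ltac:(lia)). pose proof (leaf_lt n m l Hm Hln).
    assert (Hc2 : cos (theta (leaf n m l) - theta (leaf n m k)) < cos (psi (a k) (a l))).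
    { rewrite psi_cos by lra. unfold a. replace (2 * uu w0 w (leaf n m k) * uu w0 w (leaf n m l))
        with (2 * uu w0 w (leaf n m l) * uu w0 w (leaf n m k)) by ring. apply Hcos; auto. }
    apply range_of_cos_lt; auto.
    + unfold leaf in *. destruct (Nat.ltb_spec (m+k) n), (Nat.ltb_spec (m+l) n); try lia.
      * pose proof (Hmono (m+k)%nat (m+l)%nat ltac:(lia) ltac:(lia)).
        pose proof (Hwrap (m+k)%nat (m+l)%nat ltac:(lia) ltac:(lia)). lra.
      * pose proof (Hmono (m+l-n)%nat (m+k)%nat ltac:(lia) ltac:(lia)).
        pose proof (Hwrap (m+l-n)%nat (m+k)%nat ltac:(lia) ltac:(lia)). lra.
      * pose proof (Hmono (m+k-n)%nat (m+l-n)%nat ltac:(lia) ltac:(lia)).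
        pose proof (Hwrap (m+k-n)%nat (m+l-n)%nat ltac:(lia) ltac:(lia)). lra.
    + unfold leaf in *. destruct (Nat.ltb_spec (m+k) n), (Nat.ltb_spec (m+l) n); try lia.
      * replace (theta (m + l)%nat - theta m + 0 - (theta (m + k)%nat - theta m + 0))
          with (theta (m + l)%nat - theta (m + k)%nat) by ring. exact Hc2.
      * replace (theta (m + l - n)%nat - theta m + 2 * PI - (theta (m + k)%nat - theta m + 0))
          with (theta (m + l - n)%nat - theta (m + k)%nat + 2 * PI) by ring. rewrite cos_p2PI. exact Hc2.
      * replace (theta (m + l - n)%nat - theta m + 2 * PI - (theta (m + k - n)%nat - theta m + 2 * PI))
          with (theta (m + l - n)%nat - theta (m + k - n)%nat) by ring. exact Hc2.
Qed.
End Nec.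

Definition SI (a q : nat -> R) (j t : nat) (st : nat -> nat) (T : R) :=
  (t < j)%nat /\ st 0%nat = 0%nat /\ (forall p, (p < t)%nat -> (st p < st (S p))%nat) /\ (st t < j)%nat /\
  sound a q j /\ attained a q j /\
  (forall i, (i < j)%nat -> exists p, (p <= t)%nat /\ (i <= st p)%nat /\ a i <= a (st p)) /\
  (forall l, (1 <= l)%nat -> (l < j)%nat -> q l + psi (a l) (a 0%nat) <= T) /\
  (T = 0 \/ exists l, (1 <= l)%nat /\ (l < j)%nat /\ T = q l + psi (a l) (a 0%nat)).

Lemma SI_init a q st : q 0%nat = 0 -> st 0%nat = 0%nat -> SI a q 1 0 st 0.
Proof.
  intros Hq Hs. unfold SI, sound, attained.
  split; [lia|]. split; [auto|]. split; [intros; lia|]. split; [rewrite Hs; lia|].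
  split; [intros; lia|]. split; [split; [auto| intros; lia]|]. split.
  { intros i Hi. exists 0%nat. replace i with 0%nat by lia. rewrite Hs. split; [lia|split; [lia|lra]]. }
  split; [intros; lia|]. left; reflexivity.
Qed.

Lemma st_mono st t : (forall p, (p < t)%nat -> (st p < st (S p))%nat) ->
  forall p p', (p < p')%nat -> (p' <= t)%nat -> (st p < st p')%nat.
Proof.
  intros H p p' Hp. induction p'. lia. intros.
  destruct (Nat.eq_dec p p'). subst. apply H; lia.
  specialize (IHp' ltac:(lia) ltac:(lia)). specialize (H p' ltac:(lia)). lia.
Qed.

Section Step.
Variables (a q : nat -> R) (n j t0 t : nat) (st : nat -> nat) (T cand : R).
Hypothesis Ha : in01 a n.
Hypothesis Hmax : forall k, (k < n)%nat -> a k <= a 0%nat.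
Hypothesis Hj : (1 <= j)%nat.
Hypothesis Hjn : (j < n)%nat.
Hypothesis Hsi : SI a q j t0 st T.
Hypothesis Htt : (t <= t0)%nat.
Hypothesis Hpop : forall p, (t < p <= t0)%nat -> q (st p) + psi (a (st p)) (a j) <= cand /\ a (st p) < a j.
Hypothesis Htop : q (st t) + psi (a (st t)) (a j) <= cand.
Hypothesis Hstop : a j <= a (st t).
Hypothesis Hcand : cand = 0 \/ exists i, (i < j)%nat /\ cand = q i + psi (a i) (a j).

Definition q' := fun l => if Nat.eqb l j then cand else q l.
Definition st' := fun p => if Nat.eqb p (S t) then j else st p.
Definition T' := if Rlt_dec T (cand + psi (a j) (a 0%nat)) then cand + psi (a j) (a 0%nat) else T.

Lemma q_nonneg : forall l, (l < j)%nat -> 0 <= q l.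
Proof.
  destruct Hsi as (_ & _ & _ & _ & Hs & [Hq0 _] & _).
  intros l Hl. destruct l. lra. specialize (Hs 0%nat (S l) ltac:(lia) Hl).
  pose proof (Ha 0%nat ltac:(lia)). pose proof (Ha (S l) ltac:(lia)).
  pose proof (psi_nonneg (a 0%nat) (a (S l)) ltac:(lra) ltac:(lra)). lra.
Qed.

Lemma dom_main : forall i, (i < j)%nat -> q i + psi (a i) (a j) <= cand.
Proof.
  destruct Hsi as (Ht0 & Hs0 & Hinc & Hstj & Hs & Hat & Hdom & _).
  assert (Hstp : forall p, (p <= t0)%nat -> (st p < j)%nat).
  { intros p Hp. destruct (Nat.eq_dec p t0). subst; auto.
    pose proof (st_mono st t0 Hinc p t0 ltac:(lia) ltac:(lia)). lia. }
  intros i Hi. destruct (Hdom i Hi) as (p & Hp & Hip & Hap).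
  set (s := st p) in *.
  assert (Hs_lt : (s < j)%nat) by (apply Hstp; auto).
  assert (Hai : 0 < a i < 1) by (apply Ha; lia).
  assert (Has : 0 < a s < 1) by (apply Ha; lia).
  assert (Haj : 0 < a j < 1) by (apply Ha; lia).
  assert (Hqi : q i <= q s).
  { destruct (Nat.eq_dec i s). rewrite e; lra.
    specialize (Hs i s ltac:(lia) Hs_lt). pose proof (psi_nonneg (a i) (a s) ltac:(lra) ltac:(lra)). lra. }
  assert (H1 : q i + psi (a i) (a j) <= q s + psi (a s) (a j)).
  { pose proof (psi_mono (a i) (a s) (a j) ltac:(lra) Hap ltac:(lra) ltac:(lra)). lra. }
  destruct (Nat.lt_ge_cases t p).
  - destruct (Hpop p ltac:(lia)). unfold s in *. lra.
  - destruct (Nat.eq_dec p t). subst p. unfold s in H1. lra.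
    pose proof (st_mono st t0 Hinc p t ltac:(lia) ltac:(lia)) as Hlt. fold s in Hlt.
    pose proof (Hstp t ltac:(lia)).
    assert (Hat' : 0 < a (st t) < 1) by (apply Ha; lia).
    pose proof (Hs s (st t) Hlt ltac:(lia)).
    pose proof (psi_mono2 (a s) (a j) (a (st t)) ltac:(lra) ltac:(lra) Hstop ltac:(lra)).
    pose proof (psi_nonneg (a (st t)) (a j) ltac:(lra) ltac:(lra)).
    lra.
Qed.

Lemma SI_step : SI a q' (S j) (S t) st' T'.
Proof.
  pose proof dom_main as Hdm. pose proof q_nonneg as Hqn.
  destruct Hsi as (Ht0 & Hs0 & Hinc & Hstj & Hs & [Hq0 Hat] & Hdom & HT1 & HT2).
  assert (Hstp : forall p, (p <= t0)%nat -> (st p < j)%nat).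
  { intros p Hp. destruct (Nat.eq_dec p t0). subst; auto.
    pose proof (st_mono st t0 Hinc p t0 ltac:(lia) ltac:(lia)). lia. }
  assert (Hcpos : 0 < cand).
  { pose proof (Hstp t Htt). pose proof (Hqn (st t) H).
    assert (0 < a (st t) < 1) by (apply Ha; lia). assert (0 < a j < 1) by (apply Ha; lia).
    pose proof (psi_range _ _ H1 H2). lra. }
  unfold SI, q', st', T'.
  split; [lia|]. split; [destruct (Nat.eqb_spec 0 (S t)); [lia|auto]|].
  split.
  { intros p Hp. destruct (Nat.eqb_spec p (S t)); [lia|]. destruct (Nat.eqb_spec (S p) (S t)).
    - assert (p = t) by lia. subst. apply Hstp; lia.
    - apply Hinc; lia. }
  split; [rewrite Nat.eqb_refl; lia|].
  split.
  { intros i l Hil Hl. destruct (Nat.eqb_spec i j); [lia|]. destruct (Nat.eqb_spec l j).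
    - subst l. apply Hdm; lia.
    - apply Hs; lia. }
  split.
  { split. destruct (Nat.eqb_spec 0 j); [lia|auto].
    intros l Hl0 Hl. destruct (Nat.eqb_spec l j).
    - subst l. destruct Hcand as [Hc|(i & Hi & Hc)]; [lra|]. exists i. split; auto.
      destruct (Nat.eqb_spec i j); [lia|auto].
    - destruct (Hat l Hl0 ltac:(lia)) as (i & Hi & Hc). exists i. split; auto.
      destruct (Nat.eqb_spec i j); [lia|auto]. }
  split.
  { intros i Hi. destruct (Nat.eq_dec i j).
    - subst i. exists (S t). rewrite Nat.eqb_refl. split; [lia|split; [lia|lra]].
    - destruct (Hdom i ltac:(lia)) as (p & Hp & Hip & Hap).
      destruct (Nat.lt_ge_cases t p).
      + destruct (Hpop p ltac:(lia)). exists (S t). rewrite Nat.eqb_refl.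
        pose proof (Hstp p Hp). split; [lia|split; [lia|lra]].
      + exists p. destruct (Nat.eqb_spec p (S t)); [lia|]. split; [lia|auto]. }
  destruct (Rlt_dec T (cand + psi (a j) (a 0%nat))) as [HTl|HTg].
  - split.
    + intros l H1 H2. destruct (Nat.eqb_spec l j). subst; lra.
      specialize (HT1 l H1 ltac:(lia)). lra.
    + right. exists j. rewrite Nat.eqb_refl. split; [lia|split; [lia|auto]].
  - split.
    + intros l H1 H2. destruct (Nat.eqb_spec l j). subst; lra.
      specialize (HT1 l H1 ltac:(lia)). lra.
    + destruct HT2 as [->|(l & H1 & H2 & H3)]; [left; auto|right].
      exists l. destruct (Nat.eqb_spec l j); [lia|]. split; [lia|split; [lia|auto]].
Qed.
End Step.

Definition prog : list instr := [
 (*0*) IConst 12 1%Z; IConst 13 0%Z; IConst 2 3%Z; IMul 1 0 2; IConst 2 20%Z;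
 (*5*) IAdd 1 1 2; JEqI 0 13 151; ISub 4 1 12; RStore 4 0; IConst 3 0%Z;
 (*10*) IMov 4 12; IMov 5 1; JEqI 3 0 19; RLoad 0 4; RStore 5 0;
 (*15*) IAdd 3 3 12; IAdd 4 4 12; IAdd 5 5 12; Jmp 12; ISub 4 1 12;
 (*20*) RLoad 1 4; IConst 6 0%Z; RLoad 2 1; IMov 3 12; IAdd 4 1 12;
 (*25*) JEqI 3 0 34; RLoad 3 4; JLtR 2 3 29; Jmp 31; RMov 2 3;
 (*30*) IMov 6 3; IAdd 3 3 12; IAdd 4 4 12; Jmp 25; IAdd 5 1 0;
 (*35*) IConst 3 0%Z; IMov 11 6; JEqI 3 0 50; JEqI 11 0 48; IAdd 4 1 11;
 (*40*) RLoad 3 4; RAdd 4 1 3; RDiv 3 3 4; RStore 5 3; IAdd 3 3 12;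
 (*45*) IAdd 5 5 12; IAdd 11 11 12; Jmp 37; IConst 11 0%Z; Jmp 39;
 (*50*) IAdd 14 1 0; IAdd 15 14 0; RConst 5 0%Z; RConst 8 0%Z; RStore 15 8;
 (*55*) IConst 16 20%Z; IStore 16 13; IConst 7 0%Z; RLoad 6 14; IMov 8 12;
 (*60*) JEqI 8 0 97; IAdd 4 14 8; RLoad 7 4; RConst 8 0%Z; IAdd 9 16 7;
 (*65*) ILoad 10 9; IAdd 4 14 10; RLoad 9 4; IAdd 5 15 10; RLoad 11 5;
 (*70*) RMul 10 9 7; RSqrt 10 10; RAsin 10 10; RAdd 10 10 10; RAdd 10 11 10;
 (*75*) JLtR 8 10 77; Jmp 78; RMov 8 10; JLtR 9 7 80; Jmp 82;
 (*80*) ISub 7 7 12; Jmp 64; IAdd 5 15 8; RStore 5 8; RMul 10 7 6;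
 (*85*) RSqrt 10 10; RAsin 10 10; RAdd 10 10 10; RAdd 10 8 10; JLtR 5 10 91;
 (*90*) Jmp 92; RMov 5 10; IAdd 7 7 12; IAdd 9 16 7; IStore 9 8;
 (*95*) IAdd 8 8 12; Jmp 60; RPi 12; RAdd 12 12 12; JLtR 5 12 102;
 (*100*) IConst 0 0%Z; Halt; RSub 13 12 5; IToR 14 0; RDiv 13 13 14;
 (*105*) IAdd 17 15 0; IConst 3 0%Z; IMov 11 6; IConst 18 3%Z; JEqI 3 0 135;
 (*110*) JEqI 11 0 133; IAdd 5 15 3; RLoad 3 5; IToR 4 3; RMul 4 13 4;
 (*115*) RAdd 3 3 4; IAdd 4 1 11; RLoad 9 4; RAdd 10 1 9; RCos 11 3;
 (*120*) RMul 11 10 11; RSin 2 3; RMul 2 10 2; IMul 4 11 18; IAdd 4 4 17;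
 (*125*) RStore 4 11; IAdd 4 4 12; RStore 4 2; IAdd 4 4 12; RStore 4 9;
 (*130*) IAdd 3 3 12; IAdd 11 11 12; Jmp 109; IConst 11 0%Z; Jmp 111;
 (*135*) IConst 3 0%Z; IMul 19 0 18; IMov 4 17; IConst 5 3%Z; JEqI 3 19 146;
 (*140*) RLoad 0 4; RStore 5 0; IAdd 3 3 12; IAdd 4 4 12; IAdd 5 5 12;
 (*145*) Jmp 139; RMov 2 1; RConst 0 0%Z; RConst 1 0%Z; IConst 0 1%Z;
 (*150*) Halt; RMov 1 0; Jmp 146 ].

Lemma prog_len : length prog = 153%nat. Proof. reflexivity. Qed.

Lemma run_S t s : run prog (S t) s = run prog t (step prog s).
Proof. reflexivity. Qed.
Lemma run_0 s : run prog 0 s = s.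
Proof. reflexivity. Qed.
Lemma run_add a b s : run prog (a + b) s = run prog b (run prog a s).
Proof. revert s; induction a; intros; simpl; auto. Qed.

Arguments updR m k v j /.
Arguments updZ m k v j /.
Arguments Nat.eqb !n !m.

Definition Bn (n : nat) : nat := (3 * n + 20)%nat.

Lemma ex_step s c b (Q : config -> Prop) :
  (exists t, (t + S c <= b)%nat /\ Q (run prog t (step prog s))) ->
  exists t, (t + c <= b)%nat /\ Q (run prog t s).
Proof. intros (t & H1 & H2). exists (S t). split. lia. exact H2. Qed.
Lemma ex_start b (Q : config -> Prop) s :
  (exists t, (t + 0 <= b)%nat /\ Q (run prog t s)) ->
  exists t, (t <= b)%nat /\ Q (run prog t s).
Proof. intros (t & H1 & H2). exists t. split. lia. exact H2. Qed.

Ltac go := first [apply ex_step | apply ex_start; apply ex_step]; cbn [step prog nth pc rm im updR updZ Nat.eqb].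
Ltac fin := exists 0%nat; split; [lia|]; cbn [run].

Ltac rwz z := repeat match goal with H : z ?k = _ |- context [z ?k] => rewrite H end.

Ltac upd := unfold Bn in *; cbn [updR updZ]; repeat match goal with |- context [Nat.eqb ?a ?b] => destruct (Nat.eqb_spec a b) end; try lia.


Section Copy.
Variables (n : nat) (w0 : R) (w : nat -> R).

Definition CopyIn (i : nat) (m : nat -> R) (z : nat -> Z) : Prop :=
  z 0%nat = Z.of_nat n /\ z 1%nat = Z.of_nat (Bn n) /\ z 12%nat = 1%Z /\ z 13%nat = 0%Z /\
  z 3%nat = Z.of_nat i /\ z 4%nat = Z.of_nat (S i) /\ z 5%nat = Z.of_nat (Bn n + i) /\
  m (Bn n - 1)%nat = w0 /\ (forall j, (j < n)%nat -> m (S j) = w j) /\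
  (forall j, (j < i)%nat -> m (Bn n + j)%nat = w j).

Definition PostCopy (s : config) := exists m' z', s = Config 19 m' z' /\ CopyIn n m' z'.

Lemma copy_loop : forall k i m z, (n - i = k)%nat -> (i <= n)%nat -> CopyIn i m z ->
  exists t, (t <= 7 * k + 1)%nat /\ PostCopy (run prog t (Config 12 m z)).
Proof.
  induction k; intros i m z Hk Hi H;
    destruct H as (H0 & H1 & H12 & H13 & H3 & H4 & H5 & Hw0 & Hin & Hc).
  - assert (i = n) by lia. subst i.
    go. rwz z. rewrite Z.eqb_refl. fin. eexists _, _; split; [reflexivity|].
    repeat split; auto.
  - go. rwz z. destruct (Z.eqb_spec (Z.of_nat i) (Z.of_nat n)); [lia|].
    do 6 go. rwz z. rewrite !Nat2Z.id.
    edestruct (IHk (S i)) as (t & Ht & Hr); [| |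
    | exists t; split; [|exact Hr]; lia]; try lia.
    repeat split; cbn [updZ Nat.eqb]; rwz z; try lia.
    * upd. auto.
    * intros j Hj. upd. auto.
    * intros j Hj. upd. rewrite Hin; [f_equal; lia| lia]. apply Hc; lia.
Qed.
End Copy.

Section Ph.
Variables (n : nat) (w0 : R) (w : nat -> R).

Definition PostInit (s : config) := exists m z, s = Config 12 m z /\ CopyIn n w0 w 0 m z.

Lemma init_phase : (0 < n)%nat ->
  exists t, (t <= 12)%nat /\ PostInit (run prog t (star_input n w0 w)).
Proof.
  intros Hn. unfold star_input.
  do 7 go.
  destruct (Z.eqb_spec (Z.of_nat n) 0); [lia|].
  do 5 go. fin. eexists _, _; split; [reflexivity|].
  repeat split; cbn [updZ updR Nat.eqb]; try (unfold Bn; lia).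
  - upd; auto.
  - intros j Hj. upd. destruct (Nat.ltb_spec j n); [reflexivity|lia].

Qed.

Definition Frame (m : nat -> R) (z : nat -> Z) : Prop :=
  z 0%nat = Z.of_nat n /\ z 1%nat = Z.of_nat (Bn n) /\ z 12%nat = 1%Z /\ z 13%nat = 0%Z /\
  m 1%nat = w0 /\ (forall j, (j < n)%nat -> m (Bn n + j)%nat = w j).

Definition ArgInv (i mm : nat) (m : nat -> R) (z : nat -> Z) : Prop :=
  Frame m z /\ z 3%nat = Z.of_nat i /\ z 4%nat = Z.of_nat (Bn n + i) /\ z 6%nat = Z.of_nat mm /\
  (mm < i)%nat /\ m 2%nat = w mm /\ (forall j, (j < i)%nat -> w j <= w mm).

Definition PostArg0 (s : config) := exists m z, s = Config 25 m z /\ ArgInv 1 0 m z.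

Lemma arg_start m z : (0 < n)%nat -> CopyIn n w0 w n m z ->
  exists t, (t <= 6)%nat /\ PostArg0 (run prog t (Config 19 m z)).
Proof.
  intros Hn (H0 & H1 & H12 & H13 & H3 & H4 & H5 & Hw0 & Hin & Hc).
  do 6 go. rwz z. fin. eexists _, _; split; [reflexivity|].
  unfold ArgInv, Frame. cbn [updZ updR Nat.eqb]. rwz z.
  repeat split; try lia.
  - replace (Z.to_nat (Z.of_nat (Bn n) - 1)) with (Bn n - 1)%nat by (unfold Bn; lia). exact Hw0.
  - intros j Hj. upd. apply Hc; lia.
  - replace (Z.to_nat (Z.of_nat (Bn n))) with (Bn n + 0)%nat by lia.
    upd. apply Hc; lia.
  - intros j Hj. replace j with 0%nat by lia. lra.
Qed.

Definition PostArg (s : config) := exists m z mm, s = Config 34 m z /\ ArgInv n mm m z.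

Lemma arg_loop : forall k i mm m z, (n - i = k)%nat -> (1 <= i <= n)%nat -> ArgInv i mm m z ->
  exists t, (t <= 9 * k + 1)%nat /\ PostArg (run prog t (Config 25 m z)).
Proof.
  induction k; intros i mm m z Hk Hi H;
    destruct H as ((H0 & H1 & H12 & H13 & Hw0 & HW) & H3 & H4 & H6 & Hmm & H2 & Hmax).
  - assert (i = n) by lia. subst i.
    go. rwz z. rewrite Z.eqb_refl. fin. exists m, z, mm; split; [reflexivity|].
    repeat split; auto.
  - go. rwz z. destruct (Z.eqb_spec (Z.of_nat i) (Z.of_nat n)); [lia|].
    do 2 go. rwz z. rewrite !Nat2Z.id. rewrite H2.
    rewrite HW by lia.
    destruct (Rlt_dec (w mm) (w i)) as [Hlt|Hge].
    + do 5 go. rwz z.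
      edestruct (IHk (S i) i) as (t & Ht & Hr); [| |
      | exists t; split; [|exact Hr]; lia]; try lia.
      unfold ArgInv, Frame. cbn [updZ updR Nat.eqb]. rwz z.
      repeat split; auto; try lia.
      * intros j Hj. upd. auto.
      * intros j Hj. destruct (Nat.eq_dec j i). subst; lra.
        specialize (Hmax j ltac:(lia)). lra.
    + do 4 go. rwz z.
      edestruct (IHk (S i) mm) as (t & Ht & Hr); [| |
      | exists t; split; [|exact Hr]; lia]; try lia.
      unfold ArgInv, Frame. cbn [updZ updR Nat.eqb]. rwz z.
      repeat split; auto; try lia.
      * intros j Hj. upd. auto.
      * intros j Hj. destruct (Nat.eq_dec j i). subst; lra. apply Hmax; lia.
Qed.

Definition jj (mm k : nat) : nat := if Nat.leb (mm + k) n then (mm + k)%nat else (mm + k - n)%nat.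

Definition RotInv (k mm : nat) (m : nat -> R) (z : nat -> Z) : Prop :=
  Frame m z /\ z 6%nat = Z.of_nat mm /\ (mm < n)%nat /\ (forall j, (j < n)%nat -> w j <= w mm) /\
  z 3%nat = Z.of_nat k /\ z 5%nat = Z.of_nat (Bn n + n + k) /\ z 11%nat = Z.of_nat (jj mm k) /\
  (forall j, (j < k)%nat -> m (Bn n + n + j)%nat = uu w0 w (leaf n mm j)).

Definition PostRot0 (s : config) := exists m z mm, s = Config 37 m z /\ RotInv 0 mm m z.

Lemma rot_start m z mm : (0 < n)%nat -> ArgInv n mm m z ->
  exists t, (t <= 3)%nat /\ PostRot0 (run prog t (Config 34 m z)).
Proof.
  intros Hn ((H0 & H1 & H12 & H13 & Hw0 & HW) & H3 & H4 & H6 & Hmm & H2 & Hmax).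
  do 3 go. rwz z. fin. eexists _, _, mm; split; [reflexivity|].
  unfold RotInv, Frame. cbn [updZ updR Nat.eqb]. rwz z.
  repeat split; auto; try lia.
  unfold jj. destruct (Nat.leb_spec (mm + 0) n); lia.
Qed.

Definition PostRot (s : config) := exists m z mm, s = Config 50 m z /\ RotInv n mm m z.

Lemma rot_loop : forall k i mm m z, (n - i = k)%nat -> (i <= n)%nat -> RotInv i mm m z ->
  exists t, (t <= 13 * k + 1)%nat /\ PostRot (run prog t (Config 37 m z)).
Proof.
  induction k; intros i mm m z Hk Hi H;
    destruct H as ((H0 & H1 & H12 & H13 & Hw0 & HW) & H6 & Hmm & Hmax & H3 & H5 & H11 & HU).
  - assert (i = n) by lia. subst i.
    go. rwz z. rewrite Z.eqb_refl. fin. exists m, z, mm; split; [reflexivity|].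
    repeat split; auto.
  - go. rwz z. destruct (Z.eqb_spec (Z.of_nat i) (Z.of_nat n)); [lia|].
    go. rwz z.
    assert (Hleaf : (leaf n mm i < n)%nat) by (apply leaf_lt; lia).
    destruct (Z.eqb_spec (Z.of_nat (jj mm i)) (Z.of_nat n)) as [Heq|Hne].
    + assert (Hl0 : leaf n mm i = 0%nat).
      { unfold jj, leaf in *. destruct (Nat.leb_spec (mm+i) n); destruct (Nat.ltb_spec (mm+i) n); lia. }
      do 11 go. rwz z. cbn [updZ Nat.eqb]. rwz z.
      rewrite Z.add_0_r, Nat2Z.id, Hw0.
      assert (Hx : m (Bn n) = w (leaf n mm i)) by (rewrite Hl0, <- (HW 0%nat) by lia; f_equal; lia).
      rewrite Hx.
      edestruct (IHk (S i) mm) as (t & Ht & Hr); [| |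
      | exists t; split; [|exact Hr]; lia]; try lia.
      unfold RotInv, Frame. cbn [updZ updR Nat.eqb]. rwz z.
      repeat split; auto; try lia.
      all: try (intros j Hj); try (upd; auto; fail).
      * unfold jj, leaf in *. destruct (Nat.leb_spec (mm+i) n); destruct (Nat.leb_spec (mm + S i) n); lia.
      * upd.
        -- replace j with i by lia. reflexivity.
        -- apply HU; lia.
    + assert (Hl0 : jj mm i = leaf n mm i).
      { unfold jj, leaf in *. destruct (Nat.leb_spec (mm+i) n); destruct (Nat.ltb_spec (mm+i) n); lia. }
      do 9 go. rwz z. cbn [updZ Nat.eqb]. rwz z.
      rewrite <- Nat2Z.inj_add, Nat2Z.id, Hw0, Hl0.
      rewrite HW by lia.
      edestruct (IHk (S i) mm) as (t & Ht & Hr); [| |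
      | exists t; split; [|exact Hr]; lia]; try lia.
      unfold RotInv, Frame. cbn [updZ updR Nat.eqb]. rwz z.
      repeat split; auto; try lia.
      all: try (intros j Hj); try (upd; auto; fail).
      * rewrite <- Hl0. unfold jj, leaf in *. destruct (Nat.leb_spec (mm+i) n); destruct (Nat.leb_spec (mm + S i) n); lia.
      * upd.
        -- replace j with i by lia. rewrite <- Hl0. reflexivity.
        -- apply HU; lia.
Qed.
End Ph.

Lemma updR_same (m : nat -> R) k v : m k = v -> updR m k v = m.
Proof. intros H. apply functional_extensionality. intros x. unfold updR. destruct (Nat.eqb_spec x k); subst; auto. Qed.


Ltac rwm m := repeat match goal with H : m ?k = _ |- context [m ?k] => rewrite H end.
Ltac zsimp := repeat rewrite <- Nat2Z.inj_mul; repeat rewrite <- Nat2Z.inj_add; rewrite ?Nat2Z.id;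
  repeat (rewrite Z2Nat.inj_add by lia); rewrite ?Nat2Z.id; change (Z.to_nat 1) with 1%nat; change (Z.to_nat 20) with 20%nat;
  repeat match goal with |- context [Nat.eqb ?a ?b] =>
    first [destruct (Nat.eqb_spec a b); [lia|] | destruct (Nat.eqb_spec a b); [|lia]] end.


Section St.
Variables (n : nat) (w0 : R) (w : nat -> R).
Hypothesis Hw0 : 0 < w0.
Hypothesis Hw : forall i, (i < n)%nat -> 0 < w i.

Definition aa (mm k : nat) : R := uu w0 w (leaf n mm k).

Definition Core (j t0 : nat) (st : nat -> nat) (q : nat -> R) (T : R) (mm : nat) (m : nat -> R) (z : nat -> Z) :=
  Frame n w0 w m z /\ z 6%nat = Z.of_nat mm /\ (mm < n)%nat /\ (forall k, (k < n)%nat -> w k <= w mm) /\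
  (forall k, (k < n)%nat -> m (Bn n + n + k)%nat = aa mm k) /\
  z 14%nat = Z.of_nat (Bn n + n) /\ z 15%nat = Z.of_nat (Bn n + n + n) /\ z 16%nat = Z.of_nat 20 /\
  z 8%nat = Z.of_nat j /\ (1 <= j <= n)%nat /\
  (forall p, (p <= t0)%nat -> z (20 + p)%nat = Z.of_nat (st p)) /\
  (forall l, (l < j)%nat -> m (Bn n + n + n + l)%nat = q l) /\ m 5%nat = T /\ m 6%nat = aa mm 0 /\
  SI (aa mm) q j t0 st T.

Lemma Core_frame j t0 st q T mm m z m' z' : Core j t0 st q T mm m z ->
  (forall x, (x = 1 \/ x = 5 \/ x = 6 \/ (Bn n <= x < Bn n + n + n + j))%nat -> m' x = m x) ->
  (forall x, (x = 0 \/ x = 1 \/ x = 12 \/ x = 13 \/ x = 6 \/ x = 14 \/ x = 15 \/ x = 16 \/ x = 8 \/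
              (20 <= x <= 20 + t0))%nat -> z' x = z x) ->
  Core j t0 st q T mm m' z'.
Proof.
  intros ((H0 & H1 & H12 & H13 & Hw1 & HW) & H6 & Hmm & Hmax & HU & H14 & H15 & H16 & H8 & Hj & Hst & HQ & H5 & H6' & HSI) Hm Hz.
  unfold Core, Frame.
  destruct HSI as (? & ? & ? & ? & ? & [? ?] & ? & ? & ?).
  repeat split; auto.
  all: try (intros; first [rewrite Hz by lia | rewrite Hm by (unfold Bn in *; lia)]; auto).
  all: try lia.
Qed.


Definition popped j t0 t st q mm cand :=
  forall p, (t < p <= t0)%nat -> q (st p) + psi (aa mm (st p)) (aa mm j) <= cand /\ aa mm (st p) < aa mm j.
Definition catt j q mm cand := cand = 0 \/ exists i, (i < j)%nat /\ cand = q i + psi (aa mm i) (aa mm j).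

Definition PopInv j t0 t st q T cand mm m z :=
  Core j t0 st q T mm m z /\ (j < n)%nat /\ z 7%nat = Z.of_nat t /\ (t <= t0)%nat /\
  m 7%nat = aa mm j /\ m 8%nat = cand /\ popped j t0 t st q mm cand /\ catt j q mm cand.

Definition PostPop j t0 t st q T mm (s : config) := exists m z cand,
  s = Config 82 m z /\ Core j t0 st q T mm m z /\ (j < n)%nat /\ z 7%nat = Z.of_nat t /\ (t <= t0)%nat /\
  m 7%nat = aa mm j /\ m 8%nat = cand /\ popped j t0 t st q mm cand /\ catt j q mm cand /\
  q (st t) + psi (aa mm (st t)) (aa mm j) <= cand /\ aa mm j <= aa mm (st t).

Lemma psi_prog x y : asin (sqrt (x * y)) + asin (sqrt (x * y)) = psi x y.
Proof. unfold psi; ring. Qed.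

Definition BodyPost j t0 t st q T mm (s : config) :=
  PostPop j t0 t st q T mm s \/
  (0 < t)%nat /\ exists m z cand, s = Config 64 m z /\ PopInv j t0 (t - 1) st q T cand mm m z.

Lemma pop_body j t0 st q T mm : (forall k, (k < n)%nat -> aa mm k <= aa mm 0) ->
  forall t m z cand, PopInv j t0 t st q T cand mm m z ->
  exists s, (s <= 16)%nat /\ BodyPost j t0 t st q T mm (run prog s (Config 64 m z)).
Proof.
  intros Hmax0 t m z cand Hinv.
  pose proof Hinv as (HC & Hjn & H7 & Ht & Hm7 & Hm8 & Hpop & Hcatt).
  pose proof HC as ((H0 & H1 & H12 & H13 & Hw1 & HW) & H6 & Hmm & Hmax & HU & H14 & H15 & H16 & H8 & Hj & Hst & HQ & H5 & H6' & HSI).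
  pose proof HSI as (Ht0 & Hs0 & Hinc & Hstj & Hsound & Hatt & Hdom & HT1 & HT2).
  assert (Hstp : forall p, (p <= t0)%nat -> (st p < j)%nat) by
    (intros p Hp; destruct (Nat.eq_dec p t0); [subst; auto|
     pose proof (st_mono st t0 Hinc p t0 ltac:(lia) ltac:(lia)); lia]).
  assert (HB : (20 <= Bn n)%nat) by (unfold Bn; lia).
  pose proof (Hstp t Ht) as Hstt.
  do 12 go; rwz z; zsimp; rewrite Hst by lia; zsimp.
  rewrite HU by lia; rewrite HQ by lia; rwm m.
  rewrite psi_prog.
  match goal with |- context [Rlt_dec _ ?v] => set (val := v) end.
  set (cand' := if Rlt_dec cand val then val else cand).
  assert (Hc1 : cand <= cand' /\ val <= cand') by (unfold cand'; destruct (Rlt_dec cand val); lra).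
  assert (Hc2 : catt j q mm cand').
  { unfold cand'. destruct (Rlt_dec cand val); auto. unfold catt; right. exists (st t). split; [exact Hstt|reflexivity]. }
  assert (Hgoal : exists s, (s + 13 <= 16)%nat /\ BodyPost j t0 t st q T mm
     (run prog s (Config 78 (updR (updR (updR (updR (updR (updR (updR (updR m 9 (aa mm (st t))) 11 (q (st t)))
        10 (aa mm (st t) * aa mm j)) 10 (sqrt (aa mm (st t) * aa mm j))) 10 (asin (sqrt (aa mm (st t) * aa mm j))))
        10 (psi (aa mm (st t)) (aa mm j))) 10 val) 8 cand')
      (updZ (updZ (updZ (updZ z 9 (Z.of_nat (20 + t))) 10 (Z.of_nat (st t))) 4 (Z.of_nat (Bn n + n + st t)))
                 5 (Z.of_nat (Bn n + n + n + st t)))))).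
  { go. cbn [updR Nat.eqb]. rwm m.
    assert (HC' : forall m' z', (forall x, (x = 1 \/ x = 5 \/ x = 6 \/ (Bn n <= x < Bn n + n + n + j))%nat -> m' x = m x) ->
      (forall x, (x = 0 \/ x = 1 \/ x = 12 \/ x = 13 \/ x = 6 \/ x = 14 \/ x = 15 \/ x = 16 \/ x = 8 \/
              (20 <= x <= 20 + t0))%nat -> z' x = z x) -> Core j t0 st q T mm m' z')
      by (intros; eapply Core_frame; eauto).
    destruct (Rlt_dec (aa mm (st t)) (aa mm j)) as [Hp|Hp].
    - assert (Htpos : (0 < t)%nat) by (destruct t; [rewrite Hs0 in Hp; specialize (Hmax0 j Hjn); lra | lia]).
      do 2 go. fin. right. split; [exact Htpos|].
      + eexists _, _, cand'. split; [reflexivity|].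
        unfold PopInv. split; [apply HC'; intros x Hx; upd; auto|].
        cbn [updR updZ Nat.eqb]. rwz z. rwm m.
        split; [auto|]. split; [lia|]. split; [lia|]. split; [auto|]. split; [auto|]. split; [|auto].
        intros p Hp'. destruct (Nat.eq_dec p t).
        * subst p. split; [|auto]. unfold val in Hc1. lra.
        * destruct (Hpop p ltac:(lia)). split; lra.
    - go. fin. left. eexists _, _, cand'. split; [reflexivity|].
      split; [apply HC'; intros x Hx; upd; auto|].
      cbn [updR updZ Nat.eqb]. rwz z. rwm m.
      split; [auto|]. split; [lia|]. split; [lia|]. split; [auto|]. split; [auto|]. split.
      { intros p Hp'. destruct (Hpop p ltac:(lia)). split; lra. }
      split; [auto|]. split; [unfold val in Hc1; lra|lra]. }
  destruct (Rlt_dec cand val) as [Hlt|Hge].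
  - go. destruct Hgoal as (s & Hs & Hp). exists s. split. lia.
    unfold cand' in Hp. destruct (Rlt_dec cand val); [|lra]. exact Hp.
  - go. destruct Hgoal as (s & Hs & Hp). exists s. split. lia.
    unfold cand' in Hp. destruct (Rlt_dec cand val); [lra|].
    rewrite (updR_same _ 8 cand) in Hp by (cbn [updR Nat.eqb]; auto). exact Hp.
Qed.


Lemma pop_loop j t0 st q T mm : (forall k, (k < n)%nat -> aa mm k <= aa mm 0) ->
  forall t m z cand, PopInv j t0 t st q T cand mm m z ->
  exists s tf, (tf <= t)%nat /\ (s + 16 * tf <= 16 * t + 16)%nat /\ PostPop j t0 tf st q T mm (run prog s (Config 64 m z)).
Proof.
  intros Hmax0. induction t; intros m z cand Hinv;
    destruct (pop_body j t0 st q T mm Hmax0 _ m z cand Hinv) as (s1 & Hs1 & [Hp|(Ht & m' & z' & cand' & Hr & Hi)]).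
  - exists s1, 0%nat. split; [lia|]. split; [lia|auto].
  - lia.
  - exists s1, (S t). split; [lia|]. split; [lia|auto].
  - replace (S t - 1)%nat with t in Hi by lia.
    destruct (IHt m' z' cand' Hi) as (s2 & tf & Htf & Hs2 & Hp2).
    exists (s1 + s2)%nat, tf. split. lia. split. lia. rewrite run_add, Hr. exact Hp2.
Qed.


Lemma ex_seq s1 c b (Q : config -> Prop) Y X : run prog s1 Y = X ->
  (exists s, (s + (c + s1) <= b)%nat /\ Q (run prog s X)) -> exists s, (s + c <= b)%nat /\ Q (run prog s Y).
Proof. intros HX (s & Hs & HQ). exists (s1 + s)%nat. split. lia. rewrite run_add, HX. exact HQ. Qed.

Lemma aa_props mm : (mm < n)%nat -> (forall k, (k < n)%nat -> w k <= w mm) ->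
  in01 (aa mm) n /\ (forall k, (k < n)%nat -> aa mm k <= aa mm 0).
Proof.
  intros Hmm Hmax. split.
  - intros k Hk. unfold aa. apply uu_range; auto. apply Hw, leaf_lt; auto.
  - intros k Hk. unfold aa. replace (leaf n mm 0) with mm by (unfold leaf; destruct (Nat.ltb_spec (mm+0) n); lia).
    pose proof (leaf_lt n mm k Hmm Hk). set (l := leaf n mm k) in *.
    unfold uu. pose proof (Hw l H). pose proof (Hw mm Hmm). pose proof (Hmax l H).
    apply Rmult_le_reg_r with ((w0 + w l) * (w0 + w mm)). nra.
    replace (w l / (w0 + w l) * ((w0 + w l) * (w0 + w mm))) with (w l * (w0 + w mm)) by (field; lra).
    replace (w mm / (w0 + w mm) * ((w0 + w l) * (w0 + w mm))) with (w mm * (w0 + w l)) by (field; lra).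
    nra.
Qed.

Definition StackInv j t st q T mm m z := Core j t st q T mm m z /\ z 7%nat = Z.of_nat t.
Definition PostStack mm (s : config) := exists m z st q T t,
  s = Config 97 m z /\ StackInv n t st q T mm m z.

Lemma outer_loop mm : forall k j t st q T m z, (n - j = k)%nat -> StackInv j t st q T mm m z ->
  exists s, (s <= 50 * k + 16 * t + 1)%nat /\ PostStack mm (run prog s (Config 60 m z)).
Proof.
  induction k; intros j t st q T m z Hk (HC & H7);
  pose proof HC as ((H0 & H1 & H12 & H13 & Hw1 & HW) & H6 & Hmm & Hmax & HU & H14 & H15 & H16 & H8 & Hj & Hst & HQ & H5 & H6' & HSI);
  destruct (aa_props mm Hmm Hmax) as [Ha Hmax0].
  - assert (j = n) by lia. subst j.
    go. rwz z. rewrite Z.eqb_refl. fin. do 6 eexists; split; [reflexivity|]. exact (conj HC H7).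
  - go. rwz z. destruct (Z.eqb_spec (Z.of_nat j) (Z.of_nat n)); [lia|].
    assert (HB : (20 <= Bn n)%nat) by (unfold Bn; lia).
    do 3 go. rwz z. zsimp. rewrite HU by lia.
    match goal with |- context [run prog _ (Config 64 ?m1 ?z1)] =>
      assert (HP : PopInv j t t st q T 0 mm m1 z1) end.
    { split; [eapply Core_frame; [exact HC| |]; intros x Hx; upd; auto|].
      cbn [updR updZ Nat.eqb]. rwz z. split; [lia|]. split; [auto|]. split; [lia|].
      split; [auto|]. split; [auto|]. split; [intros p Hp; lia|left; auto]. }
    destruct (pop_loop j t st q T mm Hmax0 _ _ _ _ HP) as (s1 & tf & Htf & Hs1 & (m2 & z2 & cand & Heq & HC2 & _ & H7' & Htf0 & Hm7 & Hm8 & Hpop & Hcatt & Htop & Hstop)).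
    eapply ex_seq; [exact Heq|].
    clear HC H0 H1 H12 H13 Hw1 HW H6 HU H14 H15 H16 H8 Hst HQ H5 H6' H7 m z HP Heq.
    pose proof HC2 as ((H0 & H1 & H12 & H13 & Hw1 & HW) & H6 & _ & _ & HU & H14 & H15 & H16 & H8 & _ & Hst & HQ & H5 & H6' & _).
    do 8 go. rwz z2. zsimp. rwm m2. rewrite psi_prog.
    set (val2 := cand + psi (aa mm j) (aa mm 0)).
    assert (HSI2 : SI (aa mm) (q' q j cand) (S j) (S tf) (st' j tf st) (T' (aa mm) j T cand)).
    { apply (SI_step (aa mm) q n j t tf st T cand); auto; try lia. }
    assert (Hgoal : forall m3, m3 5%nat = T' (aa mm) j T cand ->
      (forall x, x <> 5%nat -> m3 x = updR (updR (updR (updR (updR (updR m2 (Bn n + n + n + j) cand) 10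
                          (aa mm j * aa mm 0)) 10 (sqrt (aa mm j * aa mm 0)))
                    10 (asin (sqrt (aa mm j * aa mm 0)))) 10 (psi (aa mm j) (aa mm 0))) 10 val2 x) ->
      exists s, (s + S (S (S (S (S (S (S (S (S (4 + s1))))))))) <= 50 * S k + 16 * t + 1)%nat /\
        PostStack mm (run prog s (Config 92 m3 (updZ z2 5 (Z.of_nat (Bn n + n + n + j)))))).
    { intros m3 Hm35 Hm3.
      do 5 go. rwz z2. cbn [updZ Nat.eqb]. rwz z2. zsimp.
      edestruct (IHk (S j) (S tf) (st' j tf st) (q' q j cand) (T' (aa mm) j T cand)) as (s4 & Hs4 & HP4);
        [| |exists s4; split; [|exact HP4]; lia]; [lia|].
      split; [|cbn [updZ Nat.eqb]; zsimp; lia].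
      unfold Core, Frame. cbn [updZ Nat.eqb]. rwz z2.
      split; [split; [auto|split; [auto|split; [auto|split; [auto|split]]]]|].
      { rewrite Hm3 by lia. upd; auto. }
      { intros i Hi. rewrite Hm3 by (unfold Bn in *; lia). upd; auto. }
      split; [auto|]. split; [auto|]. split; [auto|].
      split; [intros i Hi; rewrite Hm3 by (unfold Bn in *; lia); upd; auto|].
      split; [auto|]. split; [auto|]. split; [auto|]. split; [lia|]. split; [lia|].
      split.
      { intros p Hp. unfold st'. upd; try reflexivity. apply Hst; lia. }
      split.
      { intros l Hl. rewrite Hm3 by (unfold Bn in *; lia). unfold q'. upd; try reflexivity. apply HQ; lia. }
      split; [auto|]. split; [rewrite Hm3 by lia; upd; auto|]. exact HSI2. }
    destruct (Rlt_dec T val2) as [Hlt|Hge].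
    + go. apply Hgoal.
      * cbn [updR Nat.eqb]. unfold T'. fold val2. destruct (Rlt_dec T val2); [auto|lra].
      * intros x Hx. cbn [updR]. destruct (Nat.eqb_spec x 5); [lia|auto].
    + go. apply Hgoal.
      * cbn [updR Nat.eqb]. upd. unfold T'. fold val2. destruct (Rlt_dec T val2); [lra|auto].
      * intros x Hx. reflexivity.
Qed.

End St.

Section Out.
Variables (n : nat) (w0 : R) (w : nat -> R).
Hypothesis Hw0 : 0 < w0.
Hypothesis Hw : forall i, (i < n)%nat -> 0 < w i.

Definition PostSt0 mm (s : config) := exists m z, s = Config 60 m z /\
  StackInv n w0 w 1 0 (fun _ => 0%nat) (fun _ => 0) 0 mm m z.

Lemma stack_start m z mm : (0 < n)%nat -> RotInv n w0 w n mm m z ->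
  exists t, (t <= 10)%nat /\ PostSt0 mm (run prog t (Config 50 m z)).
Proof.
  intros Hn ((H0 & H1 & H12 & H13 & Hw1 & HW) & H6 & Hmm & Hmax & H3 & H5 & H11 & HU).
  assert (HB : (20 <= Bn n)%nat) by (unfold Bn; lia).
  do 10 go. rwz z. cbn [updZ updR Nat.eqb]. rwz z. zsimp. fin.
  eexists _, _; split; [reflexivity|].
  split; [|cbn [updZ Nat.eqb]; reflexivity].
  unfold Core, Frame. cbn [updZ updR Nat.eqb]. rwz z.
  split; [split; [auto|split; [auto|split; [auto|split; [auto|split]]]]|].
  { upd. auto. }
  { intros i Hi. upd. auto. }
  split; [auto|]. split; [auto|]. split; [auto|].
  split; [intros i Hi; upd; rewrite HU by lia; reflexivity|].
  zsimp.
  split; [reflexivity|]. split; [reflexivity|]. split; [reflexivity|]. split; [reflexivity|]. split; [lia|].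
  split; [intros p Hp; replace p with 0%nat by lia; upd; reflexivity|].
  split; [intros l Hl; replace l with 0%nat by lia; upd; reflexivity|].
  split; [upd; reflexivity|]. split.
  { rewrite <- (Nat.add_0_r (Bn n + n)). rewrite HU by lia. reflexivity. }
  apply SI_init; reflexivity.
Qed.


Lemma updZ_same (m : nat -> Z) k v : m k = v -> updZ m k v = m.
Proof. intros H. apply functional_extensionality. intros x. unfold updZ. destruct (Nat.eqb_spec x k); subst; auto. Qed.

Definition pp (q : nat -> R) (d : R) (k : nat) : R := q k + d * INR k.

Definition OutInv k mm q d (m : nat -> R) (z : nat -> Z) :=
  Frame n w0 w m z /\ z 6%nat = Z.of_nat mm /\ (mm < n)%nat /\ z 15%nat = Z.of_nat (Bn n + n + n) /\
  z 17%nat = Z.of_nat (Bn n + n + n + n) /\ z 18%nat = Z.of_nat 3 /\ z 3%nat = Z.of_nat k /\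
  z 11%nat = Z.of_nat (jj n mm k) /\ m 13%nat = d /\
  (forall l, (l < n)%nat -> m (Bn n + n + n + l)%nat = q l) /\
  (forall k', (k' < k)%nat ->
     m (Bn n + n + n + n + 3 * leaf n mm k')%nat = (w0 + w (leaf n mm k')) * cos (pp q d k') /\
     m (Bn n + n + n + n + 3 * leaf n mm k' + 1)%nat = (w0 + w (leaf n mm k')) * sin (pp q d k') /\
     m (Bn n + n + n + n + 3 * leaf n mm k' + 2)%nat = w (leaf n mm k')).

Definition DecPost T mm q (s : config) :=
  (2 * PI <= T /\ exists m z, s = Config 101 m z /\ z 0%nat = 0%Z) \/
  (T < 2 * PI /\ exists m z, s = Config 109 m z /\ OutInv 0 mm q ((2 * PI - T) / INR n) m z).

Lemma decide_phase t st q T mm m z : (0 < n)%nat -> StackInv n w0 w n t st q T mm m z ->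
  exists s, (s <= 12)%nat /\ DecPost T mm q (run prog s (Config 97 m z)).
Proof.
  intros Hn (HC & H7).
  pose proof HC as ((H0 & H1 & H12 & H13 & Hw1 & HW) & H6 & Hmm & Hmax & HU & H14 & H15 & H16 & H8 & Hj & Hst & HQ & H5 & H6' & HSI).
  assert (HB : (20 <= Bn n)%nat) by (unfold Bn; lia).
  do 3 go. cbn [updR Nat.eqb]. rwm m.
  destruct (Rlt_dec T (PI + PI)) as [Hlt|Hge].
  - do 7 go. rwz z. cbn [updZ updR Nat.eqb]. rwz z. rwm m. zsimp. fin. right. split; [lra|].
    eexists _, _; split; [reflexivity|].
    unfold OutInv, Frame. cbn [updZ updR Nat.eqb]. rwz z.
    split; [split; [auto|split; [auto|split; [auto|split; [auto|split]]]]|].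
    { upd. auto. }
    { intros i Hi. upd. auto. }
    split; [auto|]. split; [auto|]. split; [auto|]. split; [reflexivity|]. split; [reflexivity|]. split; [reflexivity|].
    split; [unfold jj; destruct (Nat.leb_spec (mm + 0) n); f_equal; lia|].
    split; [rewrite INR_IZR_INZ; field; apply not_0_IZR; lia|].
    split; [intros l Hl; upd; auto|].
    intros; lia.
  - do 2 go. fin. left. split; [lra|]. eexists _, _; split; [reflexivity|]. reflexivity.
Qed.


Lemma jj_next mm i : (mm < n)%nat -> (i < n)%nat -> jj n mm (S i) = S (leaf n mm i).
Proof. intros. unfold jj, leaf. destruct (Nat.ltb_spec (mm+i) n); destruct (Nat.leb_spec (mm + S i) n); lia. Qed.
Lemma jj_leaf mm i : (mm < n)%nat -> (i < n)%nat -> jj n mm i <> n -> jj n mm i = leaf n mm i.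
Proof. intros. unfold jj, leaf in *. destruct (Nat.ltb_spec (mm+i) n); destruct (Nat.leb_spec (mm + i) n); lia. Qed.
Lemma jj_wrap mm i : (mm < n)%nat -> (i < n)%nat -> jj n mm i = n -> leaf n mm i = 0%nat.
Proof. intros. unfold jj, leaf in *. destruct (Nat.ltb_spec (mm+i) n); destruct (Nat.leb_spec (mm + i) n); lia. Qed.
Lemma leaf_inj mm i i' : (mm < n)%nat -> (i < n)%nat -> (i' < n)%nat -> i <> i' -> leaf n mm i <> leaf n mm i'.
Proof. intros. intro E. apply (f_equal (kof n mm)) in E. rewrite !kof_leaf in E; auto. Qed.

Definition PostOut mm q d (s : config) := exists m z, s = Config 135 m z /\ OutInv n mm q d m z.

Lemma out_loop mm q d : forall k i m z, (n - i = k)%nat -> (i <= n)%nat -> OutInv i mm q d m z ->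
  exists s, (s <= 26 * k + 1)%nat /\ PostOut mm q d (run prog s (Config 109 m z)).
Proof.
  induction k; intros i m z Hk Hi H;
    pose proof H as ((H0 & H1 & H12 & H13 & Hw1 & HW) & H6 & Hmm & H15 & H17 & H18 & H3 & H11 & H13' & HQ & HO).
  - assert (i = n) by lia. subst i.
    go. rwz z. rewrite Z.eqb_refl. fin. eexists _, _; split; [reflexivity|exact H].
  - go. rwz z. destruct (Z.eqb_spec (Z.of_nat i) (Z.of_nat n)); [lia|].
    assert (HB : (20 <= Bn n)%nat) by (unfold Bn; lia).
    pose proof (leaf_lt n mm i Hmm ltac:(lia)) as Hlf.
    assert (Hgoal : exists s, (s + 4 <= 26 * S k + 1)%nat /\
       PostOut mm q d (run prog s (Config 111 m (updZ z 11 (Z.of_nat (leaf n mm i)))))).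
    { do 22 go. cbn [updZ updR Nat.eqb]. rwz z. rwm m. zsimp. rewrite <- INR_IZR_INZ.
      rewrite HQ by lia. rewrite HW by lia.
      edestruct (IHk (S i)) as (s & Hs & HP); [| |
        | exists s; split; [|exact HP]; lia]; try lia.
      unfold OutInv, Frame. cbn [updZ Nat.eqb]. rwz z.
      split; [split; [auto|split; [auto|split; [auto|split; [auto|split]]]]|].
      { upd. auto. }
      { intros j Hj. upd. auto. }
      split; [auto|]. split; [auto|]. split; [auto|]. split; [auto|]. split; [auto|]. split; [lia|].
      split; [rewrite jj_next by lia; lia|].
      split; [upd; auto|].
      split; [intros l Hl; upd; auto|].
      intros k' Hk'.
      destruct (Nat.eq_dec k' i) as [->|Hne].
      - split; [|split]; upd; unfold pp; reflexivity.
      - pose proof (leaf_inj mm k' i Hmm ltac:(lia) ltac:(lia) Hne).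
        destruct (HO k' ltac:(lia)) as (E1 & E2 & E3).
        split; [|split]; upd; auto. }
    go. rwz z.
    destruct (Z.eqb_spec (Z.of_nat (jj n mm i)) (Z.of_nat n)) as [Heq|Hne].
    + assert (Hl0 : leaf n mm i = 0%nat) by (apply jj_wrap; lia).
      rewrite Hl0 in Hgoal. do 2 go. destruct Hgoal as (s & Hs & HP). exists s. split; [lia|exact HP].
    + rewrite <- (jj_leaf mm i) in Hgoal by lia. rewrite <- H11 in Hgoal. rewrite updZ_same in Hgoal by reflexivity.
      destruct Hgoal as (s & Hs & HP). exists s. split; [lia|exact HP].
Qed.


Definition CoInv t (o : nat -> R) (m : nat -> R) (z : nat -> Z) :=
  z 3%nat = Z.of_nat t /\ z 19%nat = Z.of_nat (n * 3) /\ z 4%nat = Z.of_nat (Bn n + n + n + n + t) /\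
  z 5%nat = Z.of_nat (3 + t) /\ z 12%nat = 1%Z /\ m 1%nat = w0 /\ (t <= n * 3)%nat /\
  (forall x, (x < n * 3)%nat -> m (Bn n + n + n + n + x)%nat = o x) /\
  (forall x, (x < t)%nat -> m (3 + x)%nat = o x).

Definition Final (o : nat -> R) (s : config) :=
  pc s = 150%nat /\ im s 0%nat = 1%Z /\ rm s 0%nat = 0 /\ rm s 1%nat = 0 /\ rm s 2%nat = w0 /\
  forall x, (x < n * 3)%nat -> rm s (3 + x)%nat = o x.

Lemma final_steps t o m z : CoInv t o m z -> (t = n * 3)%nat ->
  exists s, (s <= 5)%nat /\ Final o (run prog s (Config 139 m z)).
Proof.
  intros (H3 & H19 & H4 & H5 & H12 & Hw1 & Ht & Ho & Hc) ->.
  go. rwz z. rewrite Z.eqb_refl. do 4 go. fin. unfold Final. cbn [pc rm im updR updZ Nat.eqb].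
  split; [reflexivity|]. split; [reflexivity|]. split; [reflexivity|]. split; [reflexivity|]. split; [auto|].
  intros x Hx. upd. apply Hc; lia.
Qed.

Lemma co_loop o : forall k t m z, (n * 3 - t = k)%nat -> CoInv t o m z ->
  exists s, (s <= 7 * k + 5)%nat /\ Final o (run prog s (Config 139 m z)).
Proof.
  induction k; intros t m z Hk H.
  - destruct (final_steps t o m z H) as (s & Hs & HF). destruct H as (_ & _ & _ & _ & _ & _ & Ht & _). lia.
    exists s. split; [lia|exact HF].
  - pose proof H as (H3 & H19 & H4 & H5 & H12 & Hw1 & Ht & Ho & Hc).
    go. rwz z. destruct (Z.eqb_spec (Z.of_nat t) (Z.of_nat (n * 3))); [lia|].
    assert (HB : (20 <= Bn n)%nat) by (unfold Bn; lia).
    do 6 go. rwz z. cbn [updZ updR Nat.eqb]. rwz z. zsimp.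
    edestruct (IHk (S t)) as (s & Hs & HP); [|
        | exists s; split; [|exact HP]; lia]; try lia.
    unfold CoInv. cbn [updZ Nat.eqb]. rwz z.
    split; [lia|]. split; [auto|]. split; [lia|]. split; [lia|]. split; [auto|].
    split; [upd; auto|]. split; [lia|]. split.
    + intros x Hx. upd. auto.
    + intros x Hx. upd.
      * replace x with t by lia. rewrite Ho by lia. f_equal; lia.
      * apply Hc; lia.
Qed.

Lemma co_start mm q d m z : OutInv n mm q d m z ->
  exists s, (s <= 21 * n + 10)%nat /\ Final (fun x => m (Bn n + n + n + n + x)%nat) (run prog s (Config 135 m z)).
Proof.
  intros ((H0 & H1 & H12 & H13 & Hw1 & HW) & H6 & Hmm & H15 & H17 & H18 & H3 & H11 & H13' & HQ & HO).
  assert (HB : (20 <= Bn n)%nat) by (unfold Bn; lia).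
  do 4 go. rwz z. cbn [updZ updR Nat.eqb]. rwz z. zsimp.
  match goal with |- context [run prog _ (Config 139 ?m1 ?z1)] =>
    assert (HCo : CoInv 0 (fun x => m (Bn n + n + n + n + x)%nat) m1 z1) end.
  { unfold CoInv. cbn [updZ Nat.eqb].
    split; [reflexivity|]. split; [reflexivity|]. split; [f_equal; lia|]. split; [reflexivity|].
    split; [auto|]. split; [upd; auto|]. split; [lia|]. split.
    + intros x Hx. upd. auto.
    + intros; lia. }
  destruct (co_loop _ (n * 3) 0%nat _ _ ltac:(lia) HCo) as (s & Hs & HP).
  exists s. split; [lia|exact HP].
Qed.

End Out.

Lemma rep_transfer n w0 w c0 r0 c r c' r' : is_weighted_star_rep n w0 w c0 r0 c r ->
  (forall i, (i < n)%nat -> c' i = c i) -> (forall i, (i < n)%nat -> r' i = r i) ->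
  is_weighted_star_rep n w0 w c0 r0 c' r'.
Proof.
  intros ((lam & Hl & Hr0 & Hr) & Ht & Ha & (theta & rho & Hc & Hinc & Hlast)) Hc' Hr'.
  split; [|split; [|split]].
  - exists lam. split; auto. split; auto. intros i Hi. rewrite Hr'; auto.
  - intros i Hi. rewrite Hc', Hr'; auto.
  - intros i j Hi Hj Hij. rewrite !Hc', !Hr'; auto.
  - exists theta, rho. split; [|split; auto]. intros i Hi. rewrite Hc'; auto.
Qed.

Lemma run_chain s1 s2 X Y : run prog s1 X = Y -> run prog (s1 + s2) X = run prog s2 Y.
Proof. intros H. rewrite run_add, H. reflexivity. Qed.

Definition FinalZ w0 (s : config) := pc s = 150%nat /\ im s 0%nat = 1%Z /\ rm s 0%nat = 0 /\ rm s 1%nat = 0 /\ rm s 2%nat = w0.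

Lemma zero_case w0 w : exists t, (t <= 13)%nat /\ FinalZ w0 (run prog t (star_input 0 w0 w)).
Proof.
  unfold star_input. do 7 go. do 6 go. fin. unfold FinalZ. cbn [pc rm im updR updZ Nat.eqb].
  repeat split; reflexivity.
Qed.

Theorem theorem4 :
  exists (prog : list instr) (C : nat),
    forall (n : nat) (w0 : R) (w : nat -> R),
      0 < w0 -> (forall i, (i < n)%nat -> 0 < w i) ->
      exists t : nat,
        (t <= C * (n + 1))%nat /\
        let s := run prog t (star_input n w0 w) in
        halted prog s /\
        (out_yes s <-> has_weighted_star_rep n w0 w) /\
        (out_yes s ->
           is_weighted_star_rep n w0 w (out_c0 s) (out_r0 s) (out_c s) (out_r s)).
Proof.
  exists prog, 200%nat. intros n w0 w Hw0 Hw.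
  destruct (Nat.eq_dec n 0) as [->|Hn].
  - destruct (zero_case w0 w) as (t & Ht & (Hpc & Hi0 & Hr0 & Hr1 & Hr2)).
    exists t. split; [lia|]. cbv zeta.
    set (s := run prog t (star_input 0 w0 w)) in *.
    assert (Hrep : is_weighted_star_rep 0 w0 w (out_c0 s) (out_r0 s) (out_c s) (out_r s)).
    { unfold out_c0, out_r0. rewrite Hr0, Hr1, Hr2. split; [|split; [|split]].
      - exists 1. split; [lra|]. split; [ring|]. intros; lia.
      - intros; lia.
      - intros; lia.
      - exists (fun _ => 0), (fun _ => 0). split; [intros; lia|]. split; [intros; lia|intros; lia]. }
    split; [unfold halted; rewrite Hpc; reflexivity|].
    split; [|intros; exact Hrep].
    split; [intros; exists (out_c0 s), (out_r0 s), (out_c s), (out_r s); exact Hrep|intros; exact Hi0].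
  - assert (Hn0 : (0 < n)%nat) by lia.
    destruct (init_phase n w0 w Hn0) as (t1 & Ht1 & (m1 & z1 & E1 & I1)).
    destruct (copy_loop n w0 w n 0 m1 z1 ltac:(lia) ltac:(lia) I1) as (t2 & Ht2 & (m2 & z2 & E2 & I2)).
    destruct (arg_start n w0 w m2 z2 Hn0 I2) as (t3 & Ht3 & (m3 & z3 & E3 & I3)).
    destruct (arg_loop n w0 w (n-1) 1 0 m3 z3 ltac:(lia) ltac:(lia) I3) as (t4 & Ht4 & (m4 & z4 & mm & E4 & I4)).
    destruct (rot_start n w0 w m4 z4 mm Hn0 I4) as (t5 & Ht5 & (m5 & z5 & mm1 & E5 & I5)).
    destruct (rot_loop n w0 w n 0 mm1 m5 z5 ltac:(lia) ltac:(lia) I5) as (t6 & Ht6 & (m6 & z6 & mm2 & E6 & I6)).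
    destruct (stack_start n w0 w m6 z6 mm2 Hn0 I6) as (t7 & Ht7 & (m7 & z7 & E7 & I7)).
    destruct (outer_loop n w0 w Hw0 Hw mm2 (n-1) 1 0 _ _ _ m7 z7 ltac:(lia) I7) as (t8 & Ht8 & (m8 & z8 & st & q & T & tt & E8 & I8)).
    destruct (decide_phase n w0 w tt st q T mm2 m8 z8 Hn0 I8) as (t9 & Ht9 & HD).
    pose proof (proj1 I8) as HC8.
    pose proof HC8 as (_ & _ & Hmm & Hmax & _ & _ & _ & _ & _ & _ & _ & _ & _ & _ & HSI).
    destruct (aa_props n w0 w Hw0 Hw mm2 Hmm Hmax) as [Ha Hamax].
    destruct HSI as (_ & _ & _ & _ & Hsound & Hatt & _ & HT1 & HT2).
    assert (Hrun9 : run prog (t1 + t2 + t3 + t4 + t5 + t6 + t7 + t8 + t9) (star_input n w0 w) =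
                    run prog t9 (Config 97 m8 z8)).
    { rewrite !run_add, E1, E2, E3, E4, E5, E6, E7, E8. reflexivity. }
    destruct HD as [(HT & m9 & z9 & E9 & Hz9) | (HT & m9 & z9 & E9 & I9)].
    + exists (t1 + t2 + t3 + t4 + t5 + t6 + t7 + t8 + t9)%nat. split; [lia|]. cbv zeta.
      rewrite Hrun9, E9.
      split; [reflexivity|]. split.
      * split; [unfold out_yes; cbn [im]; rewrite Hz9; discriminate|].
        intros (c0 & r0 & c & r & Hrep).
        destruct (rep_nec n mm2 w0 w Hw0 Hw Hmm c0 r0 c r Hrep) as (P & HP0 & HP).
        pose proof (nec_thm (aa n w0 w mm2) q n T Ha Hatt (conj HT1 HT2) P HP0 HP). lra.
      * unfold out_yes; cbn [im]; rewrite Hz9; discriminate.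
    + destruct (out_loop n w0 w mm2 q _ n 0 m9 z9 ltac:(lia) ltac:(lia) I9) as (t10 & Ht10 & (m10 & z10 & E10 & I10)).
      destruct (co_start n w0 w mm2 q _ m10 z10 I10) as (t11 & Ht11 & HF).
      exists (t1 + t2 + t3 + t4 + t5 + t6 + t7 + t8 + t9 + t10 + t11)%nat. split; [lia|]. cbv zeta.
      rewrite !run_add, E1, E2, E3, E4, E5, E6, E7, E8, E9, E10.
      set (d := (2 * PI - T) / INR n) in *.
      set (s := run prog t11 (Config 135 m10 z10)) in *.
      destruct HF as (Hpc & Hi0 & Hr0 & Hr1 & Hr2 & Hout).
      pose proof I10 as (_ & _ & _ & _ & _ & _ & _ & _ & _ & _ & HO).
      pose proof (suff_thm (aa n w0 w mm2) q n T Ha Hamax Hsound (proj1 Hatt) (conj HT1 HT2) HT Hn0) as Hsf.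
      cbv zeta in Hsf. fold d in Hsf. change (fun k => q k + d * INR k) with (pp q d) in Hsf.
      destruct Hsf as [Hp1 Hp2].
      pose proof (rep_suff n mm2 w0 w Hw0 Hw Hmm (pp q d) Hp1 Hp2) as Hrep0.
      assert (Hrep : is_weighted_star_rep n w0 w (out_c0 s) (out_r0 s) (out_c s) (out_r s)).
      { replace (out_c0 s) with (0, 0) by (unfold out_c0; rewrite Hr0, Hr1; reflexivity).
        replace (out_r0 s) with w0 by (unfold out_r0; rewrite Hr2; reflexivity).
        apply (rep_transfer _ _ _ _ _ _ _ _ _ Hrep0).
        - intros i Hi. unfold out_c, outc.
          pose proof (kof_lt n mm2 i Hmm Hi) as Hk.
          destruct (HO (kof n mm2 i) Hk) as (O1 & O2 & O3).
          rewrite leaf_kof in O1, O2, O3 by auto.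
          rewrite (Hout (3 * i)%nat) by lia. replace (4 + 3 * i)%nat with (3 + (3 * i + 1))%nat by lia.
          rewrite (Hout (3 * i + 1)%nat) by lia.
          replace (Bn n + n + n + n + 3 * i)%nat with (Bn n + n + n + n + 3 * i)%nat by lia.
          rewrite O1. replace (Bn n + n + n + n + (3 * i + 1))%nat with (Bn n + n + n + n + 3 * i + 1)%nat by lia.
          rewrite O2. reflexivity.
        - intros i Hi. unfold out_r.
          pose proof (kof_lt n mm2 i Hmm Hi) as Hk.
          destruct (HO (kof n mm2 i) Hk) as (O1 & O2 & O3).
          rewrite leaf_kof in O1, O2, O3 by auto.
          replace (5 + 3 * i)%nat with (3 + (3 * i + 2))%nat by lia.
          rewrite (Hout (3 * i + 2)%nat) by lia.
          replace (Bn n + n + n + n + (3 * i + 2))%nat with (Bn n + n + n + n + 3 * i + 2)%nat by lia.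
          exact O3. }
      split; [unfold halted; rewrite Hpc; reflexivity|].
      split; [|intros; exact Hrep].
      split; [intros; exists (out_c0 s), (out_r0 s), (out_c s), (out_r s); exact Hrep|intros; exact Hi0].
Qed.
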